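(* (1) Every element of $(\mathfrak{d}_{\mathcal{I}})_4$ is nonreduced. (2) If $d = 8$ or $d = 14$, then every element of $(\mathfrak{d}_{\mathcal{I}})_d$ is reducible or nonreduced.
   Context: Let $\tau = (1+\sqrt5)/2$. Define $Z = \mathrm{diag}(-1,1,-1)$, $T = \begin{pmatrix}0&0&1\\1&0&0\\0&1&0\end{pmatrix}$, $P = \frac{1}{2}\begin{pmatrix}1&\tau^{-1}&-\tau\\ \tau^{-1}&\tau&1\\ \tau&-1&\tau^{-1}\end{pmatrix}$. The icosahedral group $\mathcal{I}$ is the subgroup of $\mathrm{PGL}(3,\mathbb{C})$ generated by $[Z],[T],[P]$, acting on $\mathbb P^2$ by $[A]\cdot(a:b:c) = [A(a,b,c)^t]$. $(\mathfrak{d}_{\mathcal I})_d$ denotes the linear system of plane curves of degree $d$ (nonzero effective divisors on $\mathbb{P}^2$) invariant under $\mathcal{I}$, i.e. $\sigma_*C = C$ for all $\sigma\in\mathcal{I}$. *)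

(* Defs.v *)
From HB Require Import structures.
From mathcomp Require Import all_boot all_order all_algebra.
From mathcomp Require Import reals.
From mathcomp Require Import complex.
From mathcomp Require Import mpoly.

Set Implicit Arguments.
Unset Strict Implicit.
Unset Printing Implicit Defensive.

Import Order.TTheory GRing.Theory Num.Theory.
Local Open Scope ring_scope.

(* The complex numbers are modelled as R[i] for an arbitrary realType R
   (all realTypes are isomorphic to the real numbers). *)

Section Icosahedral.
Variable R : realType.

Definition tau : R := (1 + Num.sqrt 5) / 2.

Definition mx_of_rows (rows : seq (seq R)) : 'M[R[i]]_3 :=
  \matrix_(i < 3, j < 3) ((nth 0 (nth [::] rows i) j)%:C)%C.

Definition icoZ : 'M[R[i]]_3 :=
  mx_of_rows [:: [:: -1; 0; 0]; [:: 0; 1; 0]; [:: 0; 0; -1]].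

Definition icoT : 'M[R[i]]_3 :=
  mx_of_rows [:: [:: 0; 0; 1]; [:: 1; 0; 0]; [:: 0; 1; 0]].

Definition icoP : 'M[R[i]]_3 :=
  mx_of_rows
    [:: [:: 1 / 2; tau^-1 / 2; - tau / 2];
        [:: tau^-1 / 2; tau / 2; 1 / 2];
        [:: tau / 2; - 1 / 2; tau^-1 / 2]].

Definition ico_gen (g : 'M[R[i]]_3) : Prop :=
  g = icoZ \/ g = icoT \/ g = icoP \/
  g = invmx icoZ \/ g = invmx icoT \/ g = invmx icoP.

Inductive ico_elt : 'M[R[i]]_3 -> Prop :=
  | ico_one : ico_elt 1%:M
  | ico_mul : forall g A, ico_gen g -> ico_elt A -> ico_elt (g *m A).

(* The linear substitution x |-> M x on C[x0,x1,x2]: for F, the polynomial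
   F \mPo lin_subst M is x |-> F(M x). *)
Definition lin_subst (M : 'M[R[i]]_3) : 3.-tuple {mpoly R[i][3]} :=
  [tuple \sum_(j < 3) M i j *: 'X_j | i < 3].

(* Push-forward of the curve {F = 0} by [A] is {F o A^-1 = 0};
   invariance means F o A^-1 is a nonzero scalar multiple of F. *)
Definition curve_invariant (A : 'M[R[i]]_3) (F : {mpoly R[i][3]}) : Prop :=
  exists c : R[i], c != 0 /\ F \mPo lin_subst (invmx A) = c *: F.

(* F defines an element of (d_I)_d : a nonzero effective divisor of degree d
   (a nonzero form of degree d, up to scalar) invariant under every element
   of the icosahedral group. *)
Definition in_ico_system (d : nat) (F : {mpoly R[i][3]}) : Prop :=
  F != 0 /\ F \is d.-homog /\ forall A, ico_elt A -> curve_invariant A F.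

Definition nonconstant (G : {mpoly R[i][3]}) : bool := (1 < msize G)%N.

(* The curve {F = 0} is nonreduced: some irreducible component appears with
   multiplicity >= 2, i.e. G^2 divides F for a nonconstant G. *)
Definition nonreduced (F : {mpoly R[i][3]}) : Prop :=
  exists G H : {mpoly R[i][3]}, nonconstant G /\ F = G * G * H.

Definition reducible (F : {mpoly R[i][3]}) : Prop :=
  exists G H : {mpoly R[i][3]}, nonconstant G /\ nonconstant H /\ F = G * H.

End Icosahedral.

(* Main.v *)
Require Import Defs.
From HB Require Import structures.
From mathcomp Require Import all_boot all_order all_algebra.
From mathcomp Require Import reals complex mpoly ssrZ.
From mathcomp Require Import ring zify.
From Stdlib Require BinInt.
Set Implicit Arguments.
Unset Strict Implicit.
Unset Printing Implicit Defensive.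
Import Order.TTheory GRing.Theory Num.Theory.
Local Open Scope ring_scope.

Declare Scope zz_scope.
Delimit Scope zz_scope with zz.
Number Notation BinNums.Z BinInt.Z.of_num_int BinInt.Z.to_num_int : zz_scope.

Lemma iZD x y : int_of_Z (BinInt.Z.add x y) = int_of_Z x + int_of_Z y.
Proof. exact: (rmorphD int_of_Z x y). Qed.
Lemma iZM x y : int_of_Z (BinInt.Z.mul x y) = int_of_Z x * int_of_Z y.
Proof. exact: (rmorphM int_of_Z x y). Qed.
Lemma iZN x : int_of_Z (BinInt.Z.opp x) = - int_of_Z x.
Proof. exact: (rmorphN int_of_Z x). Qed.

Definition zt := (BinNums.Z * BinNums.Z)%type.
Definition ztadd (x y : zt) : zt := (BinInt.Z.add x.1 y.1, BinInt.Z.add x.2 y.2).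
Definition ztmul (x y : zt) : zt :=
  (BinInt.Z.add (BinInt.Z.mul x.1 y.1) (BinInt.Z.mul x.2 y.2),
   BinInt.Z.add (BinInt.Z.add (BinInt.Z.mul x.1 y.2) (BinInt.Z.mul x.2 y.1))
                (BinInt.Z.mul x.2 y.2)).
Definition ztopp (x : zt) : zt := (BinInt.Z.opp x.1, BinInt.Z.opp x.2).
Definition zt0 : zt := (0%zz, 0%zz).
Definition zt1 : zt := (1%zz, 0%zz).
Definition ztz (x : zt) : bool := BinInt.Z.eqb x.1 0%zz && BinInt.Z.eqb x.2 0%zz.

Fixpoint ladd (l1 l2 : seq zt) : seq zt :=
  match l1, l2 with
  | [::], _ => l2
  | _, [::] => l1
  | x :: l1', y :: l2' => ztadd x y :: ladd l1' l2'
  end.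
Definition lscale (c : zt) (l : seq zt) := map (ztmul c) l.
Definition lopp (l : seq zt) := map ztopp l.
Definition lsub l1 l2 := ladd l1 (lopp l2).
Fixpoint lunit (j : nat) (c : zt) : seq zt :=
  match j with 0%N => [:: c] | j'.+1 => zt0 :: lunit j' c end.
Definition lcomb (U : seq zt) (E : seq (seq zt)) : seq zt :=
  foldr (fun p acc => ladd (lscale p.1 p.2) acc) [::] (zip U E).
Definition lzero (l : seq zt) : bool := all ztz l.

Lemma zt_mul_aux (K : comNzRingType) (a b c e t : K) : t * t = t + 1 ->
  a * c + b * e + (a * e + b * c + b * e) * t = (a + b * t) * (c + e * t).
Proof.
move=> h.
transitivity (a * c + b * e * (t * t) + (a * e + b * c) * t); last by ring.
by rewrite h; ring.
Qed.

Section Emb.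
Variable R : realType.
Local Notation C := (R[i]).
Definition tc : C := ((tau R)%:C)%C.
Definition embz (z : BinNums.Z) : C := (int_of_Z z)%:~R.
Definition emb (x : zt) : C := embz x.1 + embz x.2 * tc.

Lemma tau2 : tau R ^+ 2 = tau R + 1.
Proof.
rewrite /tau.
have h : Num.sqrt (5 : R) ^+ 2 = 5 by rewrite sqr_sqrtr // ler0n.
set s := Num.sqrt 5 in h *.
have -> : ((1 + s) / 2) ^+ 2 = (1 + 2 * s + s ^+ 2) / 4.
  by field; rewrite ?pnatr_eq0.
rewrite h; field; rewrite ?pnatr_eq0 //.
Qed.

Lemma tc2 : tc ^+ 2 = tc + 1.
Proof. by rewrite /tc -rmorphXn tau2 rmorphD rmorph1. Qed.

Lemma embzD x y : embz (BinInt.Z.add x y) = embz x + embz y.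
Proof. by rewrite /embz iZD intrD. Qed.
Lemma embzM x y : embz (BinInt.Z.mul x y) = embz x * embz y.
Proof. by rewrite /embz iZM intrM. Qed.
Lemma embzN x : embz (BinInt.Z.opp x) = - embz x.
Proof. by rewrite /embz iZN mulrNz. Qed.
Lemma embz0 : embz 0%zz = 0. Proof. by rewrite /embz. Qed.
Lemma embz1 : embz 1%zz = 1. Proof. by rewrite /embz. Qed.

Lemma embD x y : emb (ztadd x y) = emb x + emb y.
Proof.
rewrite /emb /ztadd /= !embzD.
move: (embz x.1) (embz x.2) (embz y.1) (embz y.2) tc => a b c e t.
by rewrite mulrDl addrACA.
Qed.
Lemma embM x y : emb (ztmul x y) = emb x * emb y.
Proof.
rewrite /emb /ztmul /= !embzD !embzM.
have h := tc2. rewrite expr2 in h.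
move: (embz x.1) (embz x.2) (embz y.1) (embz y.2) tc h => a b c e t h.
exact: zt_mul_aux.
Qed.
Lemma embN x : emb (ztopp x) = - emb x.
Proof. by rewrite /emb /ztopp /= !embzN mulNr opprD. Qed.
Lemma emb0 : emb zt0 = 0. Proof. by rewrite /emb /= embz0 mul0r addr0. Qed.
Lemma emb1 : emb zt1 = 1. Proof. by rewrite /emb /= embz0 embz1 mul0r addr0. Qed.
Lemma emb_ztz x : ztz x -> emb x = 0.
Proof.
case: x => a b; rewrite /ztz /= => /andP[/BinInt.Z.eqb_spec -> /BinInt.Z.eqb_spec ->].
by rewrite /emb /= embz0 mul0r addr0.
Qed.

Fixpoint lin (l : seq zt) (a : nat -> C) : C :=
  match l with [::] => 0 | x :: l' => emb x * a 0%N + lin l' (fun n => a n.+1) end.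

Lemma lin_ladd l1 l2 a : lin (ladd l1 l2) a = lin l1 a + lin l2 a.
Proof.
elim: l1 l2 a => [|x l1 IH] [|y l2] a /=; rewrite ?add0r ?addr0 //.
by rewrite IH embD; ring.
Qed.
Lemma lin_lscale c l a : lin (lscale c l) a = emb c * lin l a.
Proof. elim: l a => [|x l IH] a /=; first by rewrite mulr0. by rewrite IH embM; ring. Qed.
Lemma lin_lopp l a : lin (lopp l) a = - lin l a.
Proof. elim: l a => [|x l IH] a /=; first by rewrite oppr0. by rewrite IH embN; ring. Qed.
Lemma lin_lsub l1 l2 a : lin (lsub l1 l2) a = lin l1 a - lin l2 a.
Proof. by rewrite /lsub lin_ladd lin_lopp. Qed.
Lemma lin_lunit j c a : lin (lunit j c) a = emb c * a j.
Proof. elim: j a => [|j IH] a /=; first by rewrite addr0. by rewrite IH emb0; ring. Qed.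
Lemma lin_lzero l a : lzero l -> lin l a = 0.
Proof.
elim: l a => [|x l IH] a //= /andP[hx hl].
by rewrite IH // emb_ztz // mul0r addr0.
Qed.
Lemma lin_lcomb U E a : (forall e, e \in E -> lin e a = 0) -> lin (lcomb U E) a = 0.
Proof.
elim: U E => [|u U IH] [|e E] //= h.
rewrite lin_ladd lin_lscale h ?mem_head // mulr0 add0r IH // => e' he'.
by apply: h; rewrite in_cons he' orbT.
Qed.

Lemma lin_cert U E (D : BinNums.Z) t a :
  (forall e, e \in E -> lin e a = 0) -> D <> 0%zz ->
  lzero (lsub (lcomb U E) (lscale (D, 0%zz) t)) -> lin t a = 0.
Proof.
move=> hE hD hz.
have := lin_lzero a hz; rewrite lin_lsub lin_lcomb // lin_lscale sub0r.
move/eqP; rewrite oppr_eq0 mulf_eq0 => /orP[|/eqP //].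
rewrite /emb /= embz0 mul0r addr0 /embz intr_eq0 => /eqP h0.
by exfalso; apply: hD; rewrite -(int_of_ZK D) h0.
Qed.
End Emb.
Definition tri := (nat * nat * nat)%type.
Definition mk3 (t : tri) : 'X_{1..3} := [multinom [tuple t.1.1; t.1.2; t.2]].
Definition i0 : 'I_3 := @Ordinal 3 0 isT.
Definition i1 : 'I_3 := @Ordinal 3 1 isT.
Definition i2 : 'I_3 := @Ordinal 3 2 isT.
Lemma mk3_0 t : mk3 t i0 = t.1.1. Proof. by []. Qed.
Lemma mk3_1 t : mk3 t i1 = t.1.2. Proof. by []. Qed.
Lemma mk3_2 t : mk3 t i2 = t.2. Proof. by []. Qed.
Lemma ord3P (P : 'I_3 -> Prop) : P i0 -> P i1 -> P i2 -> forall i, P i.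
Proof.
move=> h0 h1 h2 [m hm]; case: m hm => [|[|[|k]]] hm //.
- by rewrite (_ : Ordinal hm = i0) //; apply: val_inj.
- by rewrite (_ : Ordinal hm = i1) //; apply: val_inj.
- by rewrite (_ : Ordinal hm = i2) //; apply: val_inj.
Qed.
Lemma big3 (K : nmodType) (f : 'I_3 -> K) : \sum_(i < 3) f i = f i0 + f i1 + f i2.
Proof. rewrite !big_ord_recr big_ord0 /= add0r. by congr (_ + _ + _); congr f; apply: val_inj. Qed.
Lemma prod3 (K : comNzRingType) (f : 'I_3 -> K) : \prod_(i < 3) f i = f i0 * f i1 * f i2.
Proof. rewrite !big_ord_recr big_ord0 /= mul1r. by congr (_ * _ * _); congr f; apply: val_inj. Qed.
Lemma mk3_eta (m : 'X_{1..3}) : m = mk3 (m i0, m i1, m i2).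
Proof. apply/mnmP; apply: ord3P => //. Qed.
Lemma mk3_inj : injective mk3.
Proof.
move=> [[a b] c] [[a' b'] c'] h.
have h0 : mk3 (a,b,c) i0 = mk3 (a',b',c') i0 by rewrite h.
have h1 : mk3 (a,b,c) i1 = mk3 (a',b',c') i1 by rewrite h.
have h2 : mk3 (a,b,c) i2 = mk3 (a',b',c') i2 by rewrite h.
by move: h0 h1 h2; rewrite !(mk3_0, mk3_1, mk3_2) /= => -> -> ->.
Qed.
Definition tsum (t : tri) := (t.1.1 + t.1.2 + t.2)%N.
Lemma mdeg_mk3 t : mdeg (mk3 t) = tsum t.
Proof. by rewrite mdegE big3. Qed.
Definition trip (d : nat) : seq tri :=
  [seq (a, b, d - a - b)%N | a <- iota 0 d.+1, b <- iota 0 (d - a).+1].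
Lemma mem_trip d t : (t \in trip d) = (tsum t == d).
Proof.
case: t => [[a b] c]; rewrite /tsum /=.
apply/allpairsPdep/idP => [[a' [b' [ha hb [-> -> ->]]]]|/eqP hd].
  move: ha hb; rewrite !mem_iota /= !add0n !ltnS => ha hb. apply/eqP; lia.
exists a, b; rewrite !mem_iota /= !add0n !ltnS; split; [lia|lia|congr (_,_,_); lia].
Qed.
Lemma uniq_trip d : uniq (trip d).
Proof.
rewrite /trip; apply: allpairs_uniq_dep; [exact: iota_uniq| move=> *; exact: iota_uniq|].
by move=> [a b] [a' b'] _ _ /= [-> ->].
Qed.

Lemma sum_eq1 (K : nzRingType) (T : eqType) (s : seq T) (n : T) (c : T -> K) : uniq s ->
  \sum_(t <- s) c t * (t == n)%:R = if n \in s then c n else 0.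
Proof.
elim: s => [|x s IH]; first by rewrite big_nil.
rewrite big_cons /= in_cons => /andP[hx hs]; rewrite IH //.
have [<-|hne] := eqVneq x n; last by rewrite ?(negbTE hne) mulr0 add0r; case: ifP.
by rewrite (negbTE hx) mulr1 addr0 ?eqxx.
Qed.

Section Expand.
Variable K : idomainType.

Definition tpoly (s : seq tri) (c : tri -> K) : {mpoly K[3]} :=
  \sum_(t <- s) c t *: 'X_[mk3 t].

Lemma tpoly_coef s c n : uniq s ->
  (tpoly s c)@_(mk3 n) = if n \in s then c n else 0.
Proof.
move=> hu; rewrite /tpoly raddf_sum /=.
rewrite -(sum_eq1 n c hu); apply: eq_bigr => t _.
by rewrite mcoeffZ mcoeffX (inj_eq mk3_inj).
Qed.

Lemma tpoly_homog d c : tpoly (trip d) c \is d.-homog.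
Proof.
rewrite /tpoly big_seq; apply: rpred_sum => t ht; apply: dhomogZ.
by move: ht; rewrite mem_trip dhomogX /= mdeg_mk3.
Qed.

Lemma expand_homog d (F : {mpoly K[3]}) : F \is d.-homog ->
  F = tpoly (trip d) (fun t => F@_(mk3 t)).
Proof.
move=> hF; apply/mpolyP => m; rewrite (mk3_eta m) tpoly_coef ?uniq_trip //.
case: ifP => // /negbT; rewrite mem_trip => hd.
by apply: (dhomog_nemf_coeff hF); rewrite /= mdeg_mk3.
Qed.

Lemma meval_tpoly s c (u : 'I_3 -> K) :
  (tpoly s c).@[u] = \sum_(t <- s) c t * (u i0 ^+ t.1.1 * u i1 ^+ t.1.2 * u i2 ^+ t.2).
Proof.
rewrite /tpoly rmorph_sum /=; apply: eq_bigr => t _.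
by rewrite mevalZ mevalX prod3.
Qed.
End Expand.

Definition add2 (i : nat) (t : tri) : tri :=
  match i with 0%N => (t.1.1.+2, t.1.2, t.2) | 1%N => (t.1.1, t.1.2.+2, t.2) | _ => (t.1.1, t.1.2, t.2.+2) end.
Definition ge2 (i : nat) (t : tri) : bool :=
  match i with 0%N => (1 < t.1.1)%N | 1%N => (1 < t.1.2)%N | _ => (1 < t.2)%N end.
Definition sub2 (i : nat) (t : tri) : tri :=
  match i with 0%N => (t.1.1 - 2, t.1.2, t.2)%N | 1%N => (t.1.1, t.1.2 - 2, t.2)%N | _ => (t.1.1, t.1.2, t.2 - 2)%N end.

Lemma add2_eq i t n : (i < 3)%N -> (add2 i t == n) = ge2 i n && (t == sub2 i n).
Proof.
case: t n => [[a b] c] [[a' b'] c'].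
case: i => [|[|[|]]] // _ /=; rewrite !xpair_eqE;
 (apply/idP/idP; [move=> /andP[/andP[/eqP h1 /eqP h2] /eqP h3]|move=> /andP[h0 /andP[/andP[/eqP h1 /eqP h2] /eqP h3]]]);
 apply/andP; (try split); (try apply/andP; try split); (try apply/andP; try split); apply/eqP || idtac; lia.
Qed.

Section Qdiv.
Variable K : idomainType.
Definition Qp : {mpoly K[3]} := 'X_i0 ^+ 2 + 'X_i1 ^+ 2 + 'X_i2 ^+ 2.
Definition ordn (i : nat) : 'I_3 := match i with 0%N => i0 | 1%N => i1 | _ => i2 end.

Lemma X2_mk3 i t : (i < 3)%N -> 'X_(ordn i) ^+ 2 * 'X_[mk3 t] = 'X_[mk3 (add2 i t)] :> {mpoly K[3]}.
Proof.
move=> hi; rewrite expr2 /mpolyX -!mpolyXD -/(mpolyX _ _); congr 'X_[_].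
apply/mnmP; apply: ord3P; rewrite !mnmE; case: i hi => [|[|[|]]] //= _;
  case: t => [[a b] c] /=; lia.
Qed.

Definition qterm (g : tri -> K) (i : nat) (n : tri) : K := if ge2 i n then g (sub2 i n) else 0.
Definition qrhs (g : tri -> K) (n : tri) : K := qterm g 0 n + qterm g 1 n + qterm g 2 n.

Lemma coef_Xtp i s (g : tri -> K) n : (i < 3)%N -> uniq s ->
  ('X_(ordn i) ^+ 2 * tpoly s g)@_(mk3 n) =
  if ge2 i n && (sub2 i n \in s) then g (sub2 i n) else 0.
Proof.
move=> hi hu; rewrite /tpoly mulr_sumr raddf_sum /=.
rewrite (eq_bigr (fun t => g t * (ge2 i n && (t == sub2 i n))%:R)); last first.
  by move=> t _; rewrite -scalerAr X2_mk3 // mcoeffZ mcoeffX (inj_eq mk3_inj) add2_eq.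
case: (ge2 i n) => /=; last by rewrite big1 // => t _; rewrite mulr0.
exact: sum_eq1.
Qed.

Lemma sub2_tsum i n d : (i < 3)%N -> ge2 i n -> tsum n = d.+2 -> tsum (sub2 i n) = d.
Proof. case: n => [[a b] c]; case: i => [|[|[|]]] //= _; rewrite /tsum /=; lia. Qed.

Lemma divQ d (F : {mpoly K[3]}) (g : tri -> K) : F \is d.+2.-homog ->
  (forall n, tsum n = d.+2 -> F@_(mk3 n) = qrhs g n) ->
  F = Qp * tpoly (trip d) g.
Proof.
move=> hF hg; apply/mpolyP => m; rewrite (mk3_eta m); set n := (_, _, _).
rewrite /Qp !mulrDl !raddfD /=.
rewrite -[i0]/(ordn 0) -[i1]/(ordn 1) -[i2]/(ordn 2) !coef_Xtp ?uniq_trip //.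
have [hn|hn] := eqVneq (tsum n) d.+2.
  rewrite hg // /qrhs /qterm; congr (_ + _ + _);
  (case h2: (ge2 _ n) => //; by rewrite andTb mem_trip (sub2_tsum _ h2 hn) ?eqxx).
rewrite (dhomog_nemf_coeff hF); last by rewrite /= mdeg_mk3.
rewrite !mem_trip.
have hz : forall i, (i < 3)%N -> (if ge2 i n && (tsum (sub2 i n) == d) then g (sub2 i n) else 0) = 0.
  move=> i hi; case: ifP => // /andP[h2 /eqP hs]; exfalso; move/eqP: hn; apply.
  move: h2 hs; rewrite /n /tsum; case: i hi => [|[|[|]]] //= _; lia.
by rewrite (hz 0%N) // (hz 1%N) // (hz 2%N) // !addr0.
Qed.
End Qdiv.

Section Comp.
Variable R : realType.
Local Notation C := (R[i]).
Local Notation lsub := (lin_subst (R := R)).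

Definition cmp (M : 'M[C]_3) (F : {mpoly C[3]}) := F \mPo lsub M.

Lemma tnth_lsub M i : tnth (lsub M) i = \sum_(j < 3) M i j *: 'X_j.
Proof. by rewrite /lin_subst tnth_mktuple. Qed.

Lemma comp_comp (F : {mpoly C[3]}) (lq lr : 3.-tuple {mpoly C[3]}) :
  (F \mPo lq) \mPo lr = F \mPo [tuple (tnth lq i) \mPo lr | i < 3].
Proof.
rewrite [F \mPo lq]comp_mpolyEX [F \mPo _]comp_mpolyEX raddf_sum /=.
apply: eq_bigr => m _; rewrite comp_mpolyZ !comp_mpolyX rmorph_prod /=.
congr (_ *: _); apply: eq_bigr => i _; by rewrite rmorphXn tnth_mktuple.
Qed.

Lemma cmp_mul M N F : cmp (M *m N) F = cmp N (cmp M F).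
Proof.
rewrite /cmp comp_comp; congr (F \mPo _); apply: eq_from_tnth => i.
rewrite [LHS]tnth_lsub tnth_mktuple tnth_lsub raddf_sum /=; symmetry.
under eq_bigr => j _ do rewrite comp_mpolyZ comp_mpolyXU -tnth_nth tnth_lsub scaler_sumr.
rewrite exchange_big /=; apply: eq_bigr => k _.
by rewrite mxE scaler_suml; apply: eq_bigr => j _; rewrite scalerA.
Qed.

Lemma cmp1 F : cmp 1%:M F = F.
Proof.
rewrite /cmp -[RHS]comp_mpoly_id; congr (F \mPo _); apply: eq_from_tnth => i.
rewrite tnth_lsub tnth_mktuple (bigD1 i) //= big1 ?addr0.
  by rewrite mxE eqxx scale1r.
by move=> j hj; rewrite mxE eq_sym (negbTE hj) scale0r.
Qed.

Lemma cmpZ M c F : cmp M (c *: F) = c *: cmp M F.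
Proof. exact: comp_mpolyZ. Qed.

Lemma cmp_eval M F (u : 'I_3 -> C) :
  (cmp M F).@[u] = F.@[fun i => \sum_(j < 3) M i j * u j].
Proof.
rewrite /cmp comp_mpoly_meval; apply: meval_eq => i.
rewrite tnth_lsub rmorph_sum /=; apply: eq_bigr => j _.
by rewrite mevalZ mevalXU.
Qed.

Lemma cmp_pow M c F : cmp M F = c *: F -> forall k, cmp (M ^+ k) F = c ^+ k *: F.
Proof.
move=> h; elim=> [|k IH]; first by rewrite expr0 scale1r cmp1.
by rewrite exprS -mulmxE cmp_mul h cmpZ IH scalerA -exprS.
Qed.

Lemma cmp_mul2 M N a b F : cmp M F = a *: F -> cmp N F = b *: F ->
  cmp (M *m N) F = (a * b) *: F.
Proof. by move=> hM hN; rewrite cmp_mul hM cmpZ hN scalerA mulrC. Qed.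

End Comp.

Section Coef.
Variable R : realType.
Local Notation C := (R[i]).
Local Notation lsub := (lin_subst (R := R)).

Lemma comp_coef (F : {mpoly C[3]}) lq (h : 'X_{1..3} -> 'X_{1..3}) (w : 'X_{1..3} -> C) :
  injective h -> (forall m, 'X_[m] \mPo lq = w m *: 'X_[h m]) ->
  forall k, (F \mPo lq)@_(h k) = w k * F@_k.
Proof.
move=> hi hX k; rewrite comp_mpolyEX raddf_sum /=.
rewrite (eq_bigr (fun m => (F@_m * w m) * (m == k)%:R)); last first.
  by move=> m _; rewrite hX scalerA mcoeffZ mcoeffX (inj_eq hi).
rewrite sum_eq1 ?msupp_uniq //; case: ifP => [_|]; first by rewrite mulrC.
by rewrite mcoeff_msupp => /negbFE/eqP ->; rewrite mulr0.
Qed.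

Lemma rc0 : ((0 : R)%:C)%C = 0 :> C. Proof. exact: rmorph0. Qed.
Lemma rc1 : ((1 : R)%:C)%C = 1 :> C. Proof. exact: rmorph1. Qed.
Lemma rcN1 : ((-1 : R)%:C)%C = -1 :> C. Proof. by rewrite rmorphN rmorph1. Qed.

Lemma lsubZ0 : tnth (lsub (icoZ R)) i0 = (-1) *: 'X_i0.
Proof. by rewrite tnth_lsub big3 !mxE /= rc0 rcN1 !scale0r !addr0. Qed.
Lemma lsubZ1 : tnth (lsub (icoZ R)) i1 = 'X_i1.
Proof. by rewrite tnth_lsub big3 !mxE /= rc0 rc1 !scale0r add0r addr0 scale1r. Qed.
Lemma lsubZ2 : tnth (lsub (icoZ R)) i2 = (-1) *: 'X_i2.
Proof. by rewrite tnth_lsub big3 !mxE /= rc0 rcN1 !scale0r !add0r. Qed.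
Lemma lsubT0 : tnth (lsub (icoT R)) i0 = 'X_i2.
Proof. by rewrite tnth_lsub big3 !mxE /= rc0 rc1 !scale0r !add0r scale1r. Qed.
Lemma lsubT1 : tnth (lsub (icoT R)) i1 = 'X_i0.
Proof. by rewrite tnth_lsub big3 !mxE /= rc0 rc1 !scale0r addr0 addr0 scale1r. Qed.
Lemma lsubT2 : tnth (lsub (icoT R)) i2 = 'X_i1.
Proof. by rewrite tnth_lsub big3 !mxE /= rc0 rc1 !scale0r add0r addr0 scale1r. Qed.

Lemma XZ m : 'X_[m] \mPo lsub (icoZ R) = ((-1) ^+ (m i0 + m i2)%N) *: 'X_[m] :> {mpoly C[3]}.
Proof.
rewrite comp_mpolyX prod3 lsubZ0 lsubZ1 lsubZ2 [in RHS]mpolyXE_id prod3.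
rewrite !exprZn -!scalerAl -!scalerAr scalerA exprD.
reflexivity.
Qed.

Definition rotm (m : 'X_{1..3}) : 'X_{1..3} := mk3 (m i1, m i2, m i0).

Lemma rotm_inj : injective rotm.
Proof.
move=> m m' /mk3_inj [h1 h2 h0]; rewrite (mk3_eta m) (mk3_eta m').
by rewrite h0 h1 h2.
Qed.

Lemma mk3_0' a b c : mk3 (a, b, c) i0 = a. Proof. by []. Qed.
Lemma mk3_1' a b c : mk3 (a, b, c) i1 = b. Proof. by []. Qed.
Lemma mk3_2' a b c : mk3 (a, b, c) i2 = c. Proof. by []. Qed.

Lemma XT m : 'X_[m] \mPo lsub (icoT R) = 1 *: 'X_[rotm m] :> {mpoly C[3]}.
Proof.
rewrite comp_mpolyX prod3 lsubT0 lsubT1 lsubT2 scale1r [in RHS]mpolyXE_id prod3.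
rewrite /rotm mk3_0' mk3_1' mk3_2'.
rewrite -[LHS]mulrA [LHS]mulrC. Show. reflexivity.
Qed.

End Coef.

Definition cget (M : seq (seq zt)) (i j : nat) : zt := nth zt0 (nth [::] M i) j.
Definition cmul (M N : seq (seq zt)) : seq (seq zt) :=
  [seq [seq ztadd (ztadd (ztmul (cget M i 0) (cget N 0 j)) (ztmul (cget M i 1) (cget N 1 j)))
                  (ztmul (cget M i 2) (cget N 2 j)) | j <- iota 0 3] | i <- iota 0 3].
Definition zi (z : BinNums.Z) : zt := (z, 0%zz).
Definition cdiag (k : zt) : seq (seq zt) := [:: [:: k; zt0; zt0]; [:: zt0; k; zt0]; [:: zt0; zt0; k]].
Definition Zc : seq (seq zt) := [:: [:: zi (-1); zt0; zt0]; [:: zt0; zt1; zt0]; [:: zt0; zt0; zi (-1)]].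
Definition Tc : seq (seq zt) := [:: [:: zt0; zt0; zt1]; [:: zt1; zt0; zt0]; [:: zt0; zt1; zt0]].
Definition P2c : seq (seq zt) :=
  [:: [:: zt1; (-1, 1)%zz; (0, -1)%zz]; [:: (-1, 1)%zz; (0, 1)%zz; zt1]; [:: (0, 1)%zz; zi (-1); (-1, 1)%zz]].

Section Mats.
Variable R : realType.
Local Notation C := (R[i]).
Definition mxe (M : seq (seq zt)) : 'M[C]_3 := \matrix_(i < 3, j < 3) emb R (cget M i j).

Lemma mxe_mul M N : mxe M *m mxe N = mxe (cmul M N).
Proof.
apply/matrixP => i j; rewrite !mxE big3 !mxE.
rewrite /cget /cmul (nth_map 0%N) ?size_iota // nth_iota // add0n.
rewrite (nth_map 0%N) ?size_iota // nth_iota // add0n.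
by rewrite !embD !embM.
Qed.

Lemma mxe_diag k : mxe (cdiag k) = (emb R k)%:M.
Proof.
apply/matrixP; apply: ord3P; apply: ord3P; rewrite !mxE /= ?emb0 //.
Qed.

Lemma embz_m1 : embz R (-1)%zz = -1. Proof. by rewrite /embz. Qed.
Lemma emb_zi z : emb R (zi z) = embz R z.
Proof. by rewrite /emb /= embz0 mul0r addr0. Qed.

Lemma icoZ_mxe : icoZ R = mxe Zc.
Proof.
apply/matrixP; apply: ord3P; apply: ord3P; rewrite !mxE /= ?emb0 ?emb1 ?emb_zi ?embz_m1 ?rc0 ?rc1 ?rcN1 //.
Qed.

Lemma icoT_mxe : icoT R = mxe Tc.
Proof.
apply/matrixP; apply: ord3P; apply: ord3P; rewrite !mxE /= ?emb0 ?emb1 ?rc0 ?rc1 //.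
Qed.

Lemma tau_neq0 : tau R != 0.
Proof. apply/eqP => h; have := tau2 R; rewrite h expr2 mul0r add0r => /eqP; by rewrite eq_sym oner_eq0. Qed.

Lemma tauV : (tau R)^-1 = tau R - 1.
Proof.
apply: (mulfI tau_neq0); rewrite mulfV ?tau_neq0 // mulrBr mulr1 -expr2 tau2.
by rewrite addrAC subrr add0r.
Qed.

Lemma rcdiv2 (x : R) : ((x / 2)%:C)%C = 2^-1 * (x%:C)%C :> C.
Proof. by rewrite rmorphM fmorphV rmorph_nat mulrC. Qed.

Lemma icoP_mxe : icoP R = (2^-1 : C) *: mxe P2c.
Proof.
apply/matrixP; apply: ord3P; apply: ord3P; rewrite !mxE /= rcdiv2; congr (_ * _);
  rewrite /emb /tc /= ?embz0 ?embz1 ?embz_m1 ?tauV ?mul0r ?mul1r ?mulN1r ?add0r ?addr0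
          ?rmorphB ?rmorphN ?rc1 ?rcN1 //.
all: try (rewrite addrC; done).
Qed.
End Mats.

Section Rels.
Variable R : realType.
Local Notation C := (R[i]).

Lemma mxe_exp A k : mxe R A ^+ k.+1 = mxe R (iter k (cmul A) A).
Proof.
elim: k => [|k IH]; first by rewrite expr1.
by rewrite exprS IH -mulmxE mxe_mul.
Qed.

Lemma rel_gen (a : C) A k s : iter k (cmul A) A = cdiag (zi s) ->
  a ^+ k.+1 * embz R s = 1 -> (a *: mxe R A) ^+ k.+1 = 1.
Proof.
move=> hA ha; rewrite exprZn mxe_exp hA mxe_diag emb_zi scale_scalar_mx ha.
by [].
Qed.

Lemma half_pow k z : int_of_Z z = (2 ^ k)%N%:Z -> (2^-1 : C) ^+ k * embz R z = 1.
Proof.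
move=> hz; rewrite /embz hz (_ : ((2 ^ k)%N%:Z)%:~R = (2 ^ k)%N%:R) // natrX exprVn mulVf //.
by rewrite expf_neq0 // pnatr_eq0.
Qed.

Lemma relZ : icoZ R ^+ 2 = 1.
Proof.
rewrite icoZ_mxe -[mxe R Zc]scale1r; apply: (@rel_gen _ _ 1 (1%zz)); first by vm_compute.
by rewrite expr1n mul1r /embz.
Qed.

Lemma relT : icoT R ^+ 3 = 1.
Proof.
rewrite icoT_mxe -[mxe R Tc]scale1r; apply: (@rel_gen _ _ 2 (1%zz)); first by vm_compute.
by rewrite expr1n mul1r /embz.
Qed.

Lemma relP : icoP R ^+ 5 = 1.
Proof.
rewrite icoP_mxe; apply: (@rel_gen _ _ 4 (32%zz)); first by vm_compute.
exact: (@half_pow 5).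
Qed.

Lemma relZP : (icoZ R *m icoP R) ^+ 3 = 1.
Proof.
rewrite icoZ_mxe icoP_mxe -scalemxAr mxe_mul; apply: (@rel_gen _ _ 2 (8%zz)); first by vm_compute.
exact: (@half_pow 3).
Qed.

Lemma relTP : (icoT R *m icoP R) ^+ 5 = 1.
Proof.
rewrite icoT_mxe icoP_mxe -scalemxAr mxe_mul; apply: (@rel_gen _ _ 4 (32%zz)); first by vm_compute.
exact: (@half_pow 5).
Qed.
End Rels.

Section Chars.
Variable R : realType.
Local Notation C := (R[i]).

Lemma gen_inv (F : {mpoly C[3]}) g :
  (forall A, ico_elt A -> curve_invariant A F) -> ico_gen (invmx g) ->
  exists c : C, cmp g F = c *: F.
Proof.
move=> hI hg; have := hI _ (ico_mul hg (ico_one R)).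
by rewrite /curve_invariant mulmx1 invmxK => -[c [_ h]]; exists c.
Qed.

Lemma scal_one (F : {mpoly C[3]}) (c : C) : F != 0 -> c *: F = F -> c = 1.
Proof.
move=> hF h; apply/eqP; rewrite -subr_eq0; apply/eqP.
have : (c - 1) *: F = 0 by rewrite scalerBl h scale1r subrr.
by move/eqP; rewrite scaler_eq0 (negbTE hF) orbF => /eqP.
Qed.

Lemma pow_one (F : {mpoly C[3]}) M c k : F != 0 -> cmp M F = c *: F -> M ^+ k = 1 -> c ^+ k = 1.
Proof.
move=> hF hM hk; apply: (scal_one hF).
by rewrite -(cmp_pow hM) hk cmp1.
Qed.

Lemma chars_trivial (F : {mpoly C[3]}) : F != 0 ->
  (forall A, ico_elt A -> curve_invariant A F) ->
  [/\ cmp (icoZ R) F = F, cmp (icoT R) F = F & cmp (icoP R) F = F].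
Proof.
move=> hF hI.
have [cZ hZ] : exists c : C, cmp (icoZ R) F = c *: F.
  by apply: gen_inv => //; rewrite /ico_gen; do 3 right; left.
have [cT hT] : exists c : C, cmp (icoT R) F = c *: F.
  by apply: gen_inv => //; rewrite /ico_gen; do 4 right; left.
have [cP hP] : exists c : C, cmp (icoP R) F = c *: F.
  by apply: gen_inv => //; rewrite /ico_gen; do 5 right.
have eZ := pow_one hF hZ (relZ R).
have eT := pow_one hF hT (relT R).
have eP := pow_one hF hP (relP R).
have eZP := pow_one hF (cmp_mul2 hZ hP) (relZP R).
have eTP := pow_one hF (cmp_mul2 hT hP) (relTP R).
have cP1 : cP = 1.
  move: eZP; rewrite exprMn exprS eZ mulr1 => h.
  have : (cZ * cP ^+ 3) ^+ 2 = 1 by rewrite h expr1n.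
  rewrite exprMn eZ mul1r -exprM (_ : (3 * 2 = 5 + 1)%N) // exprD eP mul1r expr1.
  by [].
have cZ1 : cZ = 1 by move: eZP; rewrite cP1 mulr1 exprS eZ mulr1.
have cT1 : cT = 1.
  move: eTP; rewrite cP1 mulr1 (_ : 5 = 3 + 2)%N // exprD eT mul1r => h2.
  by move: eT; rewrite exprS h2 mulr1.
by split; [rewrite hZ cZ1 | rewrite hT cT1 | rewrite hP cP1]; rewrite scale1r.
Qed.
End Chars.

Definition trot (t : tri) : tri := (t.1.2, t.2, t.1.1).
Definition tle (t u : tri) : bool :=
  (t.1.1 < u.1.1)%N || ((t.1.1 == u.1.1) && ((t.1.2 < u.1.2)%N || ((t.1.2 == u.1.2) && (t.2 <= u.2)%N))).
Definition canon (t : tri) : tri :=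
  let r1 := trot t in let r2 := trot r1 in
  if tle t r1 && tle t r2 then t else if tle r1 r2 then r1 else r2.
Definition alleven (t : tri) : bool := ~~ odd t.1.1 && ~~ odd t.1.2 && ~~ odd t.2.
Definition reps (d : nat) : seq tri := undup [seq canon t | t <- trip d & alleven t].
Definition idxr (r : seq tri) (t : tri) : nat := index (canon t) r.

Lemma canon_cases t : canon t = t \/ canon t = trot t \/ canon t = trot (trot t).
Proof. rewrite /canon; case: ifP => _; [by left|case: ifP => _; by [right; left|right; right]]. Qed.

Lemma canon_reps d t : t \in trip d -> alleven t -> canon t \in reps d.
Proof. by move=> ht he; rewrite mem_undup; apply: map_f; rewrite mem_filter he ht. Qed.

Section Phi.
Variable R : realType.
Local Notation C := (R[i]).
Variable F : {mpoly C[3]}.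
Hypothesis hZ : cmp (icoZ R) F = F.
Hypothesis hT : cmp (icoT R) F = F.
Definition phi (t : tri) : C := F@_(mk3 t).

Lemma phi_rot t : phi (trot t) = phi t.
Proof.
have := comp_coef F rotm_inj (@XT R) (mk3 t).
rewrite -/(cmp _ F) hT mul1r /phi => <-.
by case: t => [[a b] c].
Qed.

Lemma phi_canon t : phi (canon t) = phi t.
Proof. by case: (canon_cases t) => [->|[->|->]]; rewrite ?phi_rot. Qed.

Lemma phi_mid t : odd (t.1.1 + t.2) -> phi t = 0.
Proof.
move=> ho.
have := comp_coef F (h := id) (w := fun m => (-1) ^+ (m i0 + m i2)%N) (fun x y => id) (@XZ R) (mk3 t).
rewrite -/(cmp _ F) hZ /phi /= => h.
move: h; case: t ho => [[a b] c] /= ho.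
rewrite mk3_0' mk3_2' -signr_odd ho expr1 mulN1r => /eqP.
rewrite -addr_eq0 -mulr2n mulrn_eq0 /= => /eqP //.
Qed.

Lemma phi_odd d t : ~~ odd d -> tsum t = d -> ~~ alleven t -> phi t = 0.
Proof.
case: t => [[a b] c]; rewrite /tsum /alleven /= => hd hs he.
have hpar : odd (a + b + c) = false by rewrite hs (negbTE hd).
case ha: (odd a).
  rewrite -phi_rot -phi_rot; apply: phi_mid => /=.
  by move: hpar; rewrite !oddD ha; case: (odd b); case: (odd c).
case hb: (odd b).
  apply: phi_mid => /=; by move: hpar; rewrite !oddD ha hb; case: (odd c).
case hc: (odd c); last by move: he; rewrite ha hb hc.
rewrite -phi_rot; apply: phi_mid => /=.
by move: hpar; rewrite !oddD ha hb hc.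
Qed.

Definition aof (d : nat) (j : nat) : C := phi (nth (0%N, 0%N, 0%N) (reps d) j).

Lemma phi_a d t : ~~ odd d -> t \in trip d ->
  phi t = if alleven t then aof d (idxr (reps d) t) else 0.
Proof.
move=> hd ht; case: ifP => he.
  by rewrite /aof /idxr nth_index ?canon_reps // phi_canon.
by apply: (phi_odd hd); [rewrite -(eqP (_ : tsum t == d)) // -mem_trip | rewrite he].
Qed.
End Phi.

Definition vt := (zt * zt * zt)%type.
Definition zpow (x : zt) (n : nat) : zt := iter n (ztmul x) zt1.
Definition cpow (v : vt) (t : tri) : zt :=
  ztmul (ztmul (zpow v.1.1 t.1.1) (zpow v.1.2 t.1.2)) (zpow v.2 t.2).
Definition cmv (M : seq (seq zt)) (v : vt) : vt :=
  let row i := ztadd (ztadd (ztmul (cget M i 0) v.1.1) (ztmul (cget M i 1) v.1.2)) (ztmul (cget M i 2) v.2) in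
  (row 0%N, row 1%N, row 2%N).
Definition eqcoef (s : BinNums.Z) (v : vt) (t : tri) : zt :=
  ztadd (cpow (cmv P2c v) t) (ztopp (ztmul (zi s) (cpow v t))).
Fixpoint formof (r : seq tri) (w : tri -> zt) (s : seq tri) : seq zt :=
  match s with
  | [::] => [::]
  | t :: s' => if alleven t then ladd (lunit (idxr r t) (w t)) (formof r w s') else formof r w s'
  end.
Definition eqE (d : nat) (s : BinNums.Z) (v : vt) : seq zt := formof (reps d) (eqcoef s v) (trip d).

Section Eval.
Variable R : realType.
Local Notation C := (R[i]).

Lemma emb_zpow x n : emb R (zpow x n) = emb R x ^+ n.
Proof. elim: n => [|n IH]; first by rewrite expr0 emb1. by rewrite /zpow iterS embM -/(zpow x n) IH exprS. Qed.

Lemma emb_cpow v t : emb R (cpow v t) = emb R v.1.1 ^+ t.1.1 * emb R v.1.2 ^+ t.1.2 * emb R v.2 ^+ t.2.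
Proof. by rewrite /cpow !embM !emb_zpow. Qed.

Lemma lin_formof r w s (a : nat -> C) (ph : tri -> C) :
  (forall t, t \in s -> ph t = if alleven t then a (idxr r t) else 0) ->
  \sum_(t <- s) ph t * emb R (w t) = lin (formof r w s) a.
Proof.
elim: s => [|t s IH] h; first by rewrite big_nil.
rewrite big_cons /= IH; last by move=> u hu; apply: h; rewrite in_cons hu orbT.
rewrite h ?mem_head //; case: (alleven t); last by rewrite mul0r add0r.
by rewrite lin_ladd lin_lunit mulrC.
Qed.

Definition vfun (v : vt) (i : 'I_3) : C := emb R (nth zt0 [:: v.1.1; v.1.2; v.2] i).

Lemma P_eval (v : vt) (i : 'I_3) :
  \sum_(j < 3) icoP R i j * vfun v j = 2^-1 * vfun (cmv P2c v) i.
Proof.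
rewrite icoP_mxe big3 !mxE -!mulrA -!mulrDr; congr (_ * _).
move: i; apply: ord3P; rewrite /vfun /cmv /= !embD !embM //.
Qed.

Lemma P_equation d s (F : {mpoly C[3]}) (v : vt) :
  F \is d.-homog -> cmp (icoP R) F = F -> int_of_Z s = (2 ^ d)%N%:Z ->
  \sum_(t <- trip d) F@_(mk3 t) * emb R (eqcoef s v t) = 0.
Proof.
move=> hF hP hs.
have h1 := cmp_eval (icoP R) F (vfun v); rewrite hP in h1.
rewrite (meval_eq _ (P_eval v)) in h1.
rewrite {1 2}(expand_homog hF) !meval_tpoly in h1.
set w := cmv P2c v in h1 *.
have e1 : forall t, t \in trip d -> F@_(mk3 t) * (2^-1 * vfun w i0) ^+ t.1.1 *
    (2^-1 * vfun w i1) ^+ t.1.2 * (2^-1 * vfun w i2) ^+ t.2 = 0 -> True by [].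
have hw : \sum_(t <- trip d) F@_(mk3 t) * ((2^-1 * vfun w i0) ^+ t.1.1 *
    (2^-1 * vfun w i1) ^+ t.1.2 * (2^-1 * vfun w i2) ^+ t.2) =
  (2^-1) ^+ d * \sum_(t <- trip d) F@_(mk3 t) * emb R (cpow w t).
  rewrite mulr_sumr big_seq [RHS]big_seq; apply: eq_bigr => t ht.
  rewrite emb_cpow !exprMn -(eqP (_ : tsum t == d)) -?mem_trip // /tsum !exprD.
  rewrite /vfun /=; ring.
have hv : \sum_(t <- trip d) F@_(mk3 t) * (vfun v i0 ^+ t.1.1 * vfun v i1 ^+ t.1.2 * vfun v i2 ^+ t.2) =
  \sum_(t <- trip d) F@_(mk3 t) * emb R (cpow v t).
  by apply: eq_bigr => t _; rewrite emb_cpow.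
rewrite hw hv in h1.
have h2 : embz R s = (2 ^ d)%N%:R by rewrite /embz hs.
rewrite (eq_bigr (fun t => F@_(mk3 t) * emb R (cpow w t) - embz R s * (F@_(mk3 t) * emb R (cpow v t)))); last first.
  by move=> t _; rewrite /eqcoef embD embN embM emb_zi; ring.
rewrite sumrB -mulr_sumr h1 h2 mulrA natrX -exprMn mulfV ?pnatr_eq0 // expr1n mul1r subrr.
by [].
Qed.

Lemma eqE_zero d s (F : {mpoly C[3]}) (v : vt) :
  ~~ odd d -> F \is d.-homog -> cmp (icoZ R) F = F -> cmp (icoT R) F = F -> cmp (icoP R) F = F ->
  int_of_Z s = (2 ^ d)%N%:Z -> lin (eqE d s v) (aof F d) = 0.
Proof.
move=> hd hF hZ hT hP hs; rewrite /eqE -(@lin_formof (reps d) (eqcoef s v) (trip d) (aof F d) (fun t => F@_(mk3 t))); first exact: P_equation hF hP hs.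
by move=> t ht; rewrite -/(phi F t) (phi_a hZ hT hd ht).
Qed.
End Eval.
Definition pts4 : seq vt := [:: (zi (1)%zz, zi (0)%zz, zi (0)%zz)].
Definition L4 : seq (seq zt) := [:: [:: ((0)%zz, (0)%zz); ((1)%zz, (0)%zz)]; [:: ((0)%zz, (0)%zz); ((0)%zz, (0)%zz)]; [:: ((0)%zz, (0)%zz); ((1)%zz, (0)%zz)]; [:: ((0)%zz, (0)%zz); ((0)%zz, (0)%zz)]; [:: ((0)%zz, (0)%zz); ((0)%zz, (0)%zz)]; [:: ((0)%zz, (0)%zz); ((1)%zz, (0)%zz)]].
Definition Dg4 : BinNums.Z := (1)%zz.
Definition cert4 : seq (BinNums.Z * seq zt) := [:: ((1)%zz, [:: ((0)%zz, (0)%zz)]); ((1)%zz, [:: ((0)%zz, (0)%zz)]); ((4)%zz, [:: ((1)%zz, (0)%zz)]); ((1)%zz, [:: ((0)%zz, (0)%zz)]); ((1)%zz, [:: ((0)%zz, (0)%zz)]); ((1)%zz, [:: ((0)%zz, (0)%zz)]); ((1)%zz, [:: ((0)%zz, (0)%zz)]); ((1)%zz, [:: ((0)%zz, (0)%zz)]); ((1)%zz, [:: ((0)%zz, (0)%zz)]); ((4)%zz, [:: ((1)%zz, (0)%zz)]); ((1)%zz, [:: ((0)%zz, (0)%zz)]); ((4)%zz, [:: ((1)%zz, (0)%zz)]); ((1)%zz, [:: ((0)%zz, (0)%zz)]); ((1)%zz, [:: ((0)%zz, (0)%zz)]); ((1)%zz, [:: ((0)%zz, (0)%zz)])].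
Definition pts8 : seq vt := [:: (zi (1)%zz, zi (0)%zz, zi (0)%zz); (zi (1)%zz, zi (1)%zz, zi (0)%zz); (zi (0)%zz, zi (1)%zz, zi (1)%zz)].
Definition L8 : seq (seq zt) := [:: [:: ((0)%zz, (0)%zz); ((0)%zz, (0)%zz); ((0)%zz, (0)%zz); ((0)%zz, (0)%zz); ((1)%zz, (0)%zz)]; [:: ((0)%zz, (0)%zz); ((0)%zz, (0)%zz); ((0)%zz, (0)%zz); ((0)%zz, (0)%zz); ((0)%zz, (0)%zz)]; [:: ((0)%zz, (0)%zz); ((0)%zz, (0)%zz); ((0)%zz, (0)%zz); ((-1)%zz, (-1)%zz); ((7)%zz, (4)%zz)]; [:: ((0)%zz, (0)%zz); ((0)%zz, (0)%zz); ((0)%zz, (0)%zz); ((0)%zz, (0)%zz); ((0)%zz, (0)%zz)]; [:: ((0)%zz, (0)%zz); ((0)%zz, (0)%zz); ((0)%zz, (0)%zz); ((1)%zz, (0)%zz); ((-1)%zz, (0)%zz)]; [:: ((0)%zz, (0)%zz); ((0)%zz, (0)%zz); ((0)%zz, (0)%zz); ((0)%zz, (0)%zz); ((0)%zz, (0)%zz)]; [:: ((0)%zz, (0)%zz); ((0)%zz, (0)%zz); ((0)%zz, (0)%zz); ((0)%zz, (0)%zz); ((1)%zz, (0)%zz)]; [:: ((0)%zz, (0)%zz); ((0)%zz, (0)%zz); ((0)%zz, (0)%zz); ((0)%zz, (0)%zz); ((0)%zz, (0)%zz)]; [:: ((0)%zz, (0)%zz); ((0)%zz, (0)%zz); ((0)%zz,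 (0)%zz); ((0)%zz, (0)%zz); ((0)%zz, (0)%zz)]; [:: ((0)%zz, (0)%zz); ((0)%zz, (0)%zz); ((0)%zz, (0)%zz); ((0)%zz, (0)%zz); ((0)%zz, (0)%zz)]; [:: ((0)%zz, (0)%zz); ((0)%zz, (0)%zz); ((0)%zz, (0)%zz); ((0)%zz, (0)%zz); ((0)%zz, (0)%zz)]; [:: ((0)%zz, (0)%zz); ((0)%zz, (0)%zz); ((0)%zz, (0)%zz); ((0)%zz, (0)%zz); ((0)%zz, (0)%zz)]; [:: ((0)%zz, (0)%zz); ((0)%zz, (0)%zz); ((0)%zz, (0)%zz); ((0)%zz, (0)%zz); ((0)%zz, (0)%zz)]; [:: ((0)%zz, (0)%zz); ((0)%zz, (0)%zz); ((0)%zz, (0)%zz); ((1)%zz, (0)%zz); ((-1)%zz, (0)%zz)]; [:: ((0)%zz, (0)%zz); ((0)%zz, (0)%zz); ((0)%zz, (0)%zz); ((0)%zz, (0)%zz); ((0)%zz, (0)%zz)]; [:: ((0)%zz, (0)%zz); ((0)%zz, (0)%zz); ((0)%zz, (0)%zz); ((0)%zz, (4)%zz); ((6)%zz, (-16)%zz)]; [:: ((0)%zz, (0)%zz); ((0)%zz, (0)%zz); ((0)%zz, (0)%zz); ((0)%zz, (0)%zz); ((0)%zz, (0)%zz)]; [:: ((0)%zz, (0)%zz); ((0)%zz, (0)%zz); ((0)%zz, (0)%zz); ((-1)%zz, (-1)%zz); ((7)%zz, (4)%zz)]; [:: ((0)%zz, (0)%zz); ((0)%zz, (0)%zz); ((0)%zz,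 (0)%zz); ((0)%zz, (0)%zz); ((0)%zz, (0)%zz)]; [:: ((0)%zz, (0)%zz); ((0)%zz, (0)%zz); ((0)%zz, (0)%zz); ((0)%zz, (0)%zz); ((0)%zz, (0)%zz)]; [:: ((0)%zz, (0)%zz); ((0)%zz, (0)%zz); ((0)%zz, (0)%zz); ((0)%zz, (0)%zz); ((0)%zz, (0)%zz)]; [:: ((0)%zz, (0)%zz); ((0)%zz, (0)%zz); ((0)%zz, (0)%zz); ((0)%zz, (0)%zz); ((0)%zz, (0)%zz)]; [:: ((0)%zz, (0)%zz); ((0)%zz, (0)%zz); ((0)%zz, (0)%zz); ((-1)%zz, (-1)%zz); ((7)%zz, (4)%zz)]; [:: ((0)%zz, (0)%zz); ((0)%zz, (0)%zz); ((0)%zz, (0)%zz); ((0)%zz, (0)%zz); ((0)%zz, (0)%zz)]; [:: ((0)%zz, (0)%zz); ((0)%zz, (0)%zz); ((0)%zz, (0)%zz); ((1)%zz, (0)%zz); ((-1)%zz, (0)%zz)]; [:: ((0)%zz, (0)%zz); ((0)%zz, (0)%zz); ((0)%zz, (0)%zz); ((0)%zz, (0)%zz); ((0)%zz, (0)%zz)]; [:: ((0)%zz, (0)%zz); ((0)%zz, (0)%zz); ((0)%zz, (0)%zz); ((0)%zz, (0)%zz); ((0)%zz, (0)%zz)]; [:: ((0)%zz, (0)%zz); ((0)%zz, (0)%zz); ((0)%zz, (0)%zz); ((0)%zz, (0)%zz); ((1)%zz, (0)%zz)]].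
Definition Dg8 : BinNums.Z := (1)%zz.
Definition cert8 : seq (BinNums.Z * seq zt) := [:: ((1)%zz, [:: ((0)%zz, (0)%zz); ((0)%zz, (0)%zz); ((0)%zz, (0)%zz)]); ((1)%zz, [:: ((0)%zz, (0)%zz); ((0)%zz, (0)%zz); ((0)%zz, (0)%zz)]); ((1280)%zz, [:: ((120)%zz, (60)%zz); ((-14)%zz, (-7)%zz); ((10)%zz, (5)%zz)]); ((1)%zz, [:: ((0)%zz, (0)%zz); ((0)%zz, (0)%zz); ((0)%zz, (0)%zz)]); ((1280)%zz, [:: ((-40)%zz, (60)%zz); ((6)%zz, (-7)%zz); ((-10)%zz, (5)%zz)]); ((1)%zz, [:: ((0)%zz, (0)%zz); ((0)%zz, (0)%zz); ((0)%zz, (0)%zz)]); ((1)%zz, [:: ((0)%zz, (0)%zz); ((0)%zz, (0)%zz); ((0)%zz, (0)%zz)]); ((1)%zz, [:: ((0)%zz, (0)%zz); ((0)%zz, (0)%zz); ((0)%zz, (0)%zz)]); ((1)%zz, [:: ((0)%zz, (0)%zz); ((0)%zz, (0)%zz); ((0)%zz, (0)%zz)]); ((1)%zz, [:: ((0)%zz, (0)%zz); ((0)%zz, (0)%zz); ((0)%zz, (0)%zz)]); ((1)%zz, [:: ((0)%zz, (0)%zz); ((0)%zz, (0)%zz); ((0)%zz, (0)%zz)]); ((1)%zz, [:: ((0)%zz, (0)%zz); ((0)%zz, (0)%zz); ((0)%zz, (0)%zz)]); ((1)%zz, [:: ((0)%zz, (0)%zz); ((0)%zz, (0)%zz); ((0)%zz,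 (0)%zz)]); ((1)%zz, [:: ((0)%zz, (0)%zz); ((0)%zz, (0)%zz); ((0)%zz, (0)%zz)]); ((1)%zz, [:: ((0)%zz, (0)%zz); ((0)%zz, (0)%zz); ((0)%zz, (0)%zz)]); ((1)%zz, [:: ((0)%zz, (0)%zz); ((0)%zz, (0)%zz); ((0)%zz, (0)%zz)]); ((1)%zz, [:: ((0)%zz, (0)%zz); ((0)%zz, (0)%zz); ((0)%zz, (0)%zz)]); ((1)%zz, [:: ((0)%zz, (0)%zz); ((0)%zz, (0)%zz); ((0)%zz, (0)%zz)]); ((1)%zz, [:: ((0)%zz, (0)%zz); ((0)%zz, (0)%zz); ((0)%zz, (0)%zz)]); ((1280)%zz, [:: ((-20)%zz, (-180)%zz); ((37)%zz, (21)%zz); ((-15)%zz, (-15)%zz)]); ((1)%zz, [:: ((0)%zz, (0)%zz); ((0)%zz, (0)%zz); ((0)%zz, (0)%zz)]); ((1280)%zz, [:: ((-20)%zz, (-180)%zz); ((37)%zz, (21)%zz); ((-15)%zz, (-15)%zz)]); ((1)%zz, [:: ((0)%zz, (0)%zz); ((0)%zz, (0)%zz); ((0)%zz, (0)%zz)]); ((1280)%zz, [:: ((120)%zz, (60)%zz); ((-14)%zz, (-7)%zz); ((10)%zz, (5)%zz)]); ((1)%zz, [:: ((0)%zz, (0)%zz); ((0)%zz, (0)%zz); ((0)%zz, (0)%zz)]); ((1)%zz, [:: ((0)%zz, (0)%zz); ((0)%zz, (0)%zz); ((0)%zz, (0)%zz)]); ((1)%zz, [:: ((0)%zz, (0)%zz);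 ((0)%zz, (0)%zz); ((0)%zz, (0)%zz)]); ((1)%zz, [:: ((0)%zz, (0)%zz); ((0)%zz, (0)%zz); ((0)%zz, (0)%zz)]); ((1)%zz, [:: ((0)%zz, (0)%zz); ((0)%zz, (0)%zz); ((0)%zz, (0)%zz)]); ((1)%zz, [:: ((0)%zz, (0)%zz); ((0)%zz, (0)%zz); ((0)%zz, (0)%zz)]); ((1280)%zz, [:: ((-40)%zz, (60)%zz); ((6)%zz, (-7)%zz); ((-10)%zz, (5)%zz)]); ((1)%zz, [:: ((0)%zz, (0)%zz); ((0)%zz, (0)%zz); ((0)%zz, (0)%zz)]); ((1280)%zz, [:: ((-20)%zz, (-180)%zz); ((37)%zz, (21)%zz); ((-15)%zz, (-15)%zz)]); ((1)%zz, [:: ((0)%zz, (0)%zz); ((0)%zz, (0)%zz); ((0)%zz, (0)%zz)]); ((1280)%zz, [:: ((-40)%zz, (60)%zz); ((6)%zz, (-7)%zz); ((-10)%zz, (5)%zz)]); ((1)%zz, [:: ((0)%zz, (0)%zz); ((0)%zz, (0)%zz); ((0)%zz, (0)%zz)]); ((1)%zz, [:: ((0)%zz, (0)%zz); ((0)%zz, (0)%zz); ((0)%zz, (0)%zz)]); ((1)%zz, [:: ((0)%zz, (0)%zz); ((0)%zz, (0)%zz); ((0)%zz, (0)%zz)]); ((1)%zz, [:: ((0)%zz, (0)%zz); ((0)%zz, (0)%zz); ((0)%zz, (0)%zz)]); ((1280)%zz, [:: ((120)%zz, (60)%zz); ((-14)%zz, (-7)%zz); ((10)%zz, (5)%zz)]);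 ((1)%zz, [:: ((0)%zz, (0)%zz); ((0)%zz, (0)%zz); ((0)%zz, (0)%zz)]); ((1)%zz, [:: ((0)%zz, (0)%zz); ((0)%zz, (0)%zz); ((0)%zz, (0)%zz)]); ((1)%zz, [:: ((0)%zz, (0)%zz); ((0)%zz, (0)%zz); ((0)%zz, (0)%zz)]); ((1)%zz, [:: ((0)%zz, (0)%zz); ((0)%zz, (0)%zz); ((0)%zz, (0)%zz)]); ((1)%zz, [:: ((0)%zz, (0)%zz); ((0)%zz, (0)%zz); ((0)%zz, (0)%zz)])].
Definition pts14 : seq vt := [:: (zi (1)%zz, zi (0)%zz, zi (0)%zz); (zi (1)%zz, zi (1)%zz, zi (0)%zz); (zi (0)%zz, zi (1)%zz, zi (1)%zz); (zi (1)%zz, zi (1)%zz, zi (1)%zz); (zi (1)%zz, zi (2)%zz, zi (0)%zz); (zi (2)%zz, zi (1)%zz, zi (0)%zz); (zi (1)%zz, zi (2)%zz, zi (3)%zz); (zi (0)%zz, zi (2)%zz, zi (1)%zz)].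
Definition L14 : seq (seq zt) := [:: [:: ((0)%zz, (0)%zz); ((0)%zz, (0)%zz); ((0)%zz, (0)%zz); ((0)%zz, (0)%zz); ((0)%zz, (0)%zz); ((0)%zz, (0)%zz); ((0)%zz, (0)%zz); ((0)%zz, (0)%zz); ((0)%zz, (0)%zz); ((0)%zz, (0)%zz); ((0)%zz, (0)%zz); ((1)%zz, (0)%zz)]; [:: ((0)%zz, (0)%zz); ((0)%zz, (0)%zz); ((0)%zz, (0)%zz); ((0)%zz, (0)%zz); ((0)%zz, (0)%zz); ((0)%zz, (0)%zz); ((0)%zz, (0)%zz); ((0)%zz, (0)%zz); ((0)%zz, (0)%zz); ((0)%zz, (0)%zz); ((0)%zz, (0)%zz); ((0)%zz, (0)%zz)]; [:: ((0)%zz, (0)%zz); ((0)%zz, (0)%zz); ((0)%zz, (0)%zz); ((0)%zz, (0)%zz); ((0)%zz, (0)%zz); ((0)%zz, (0)%zz); ((0)%zz, (0)%zz); ((0)%zz, (0)%zz); ((0)%zz, (0)%zz); ((1)%zz, (0)%zz); ((0)%zz, (0)%zz); ((-1)%zz, (0)%zz)]; [:: ((0)%zz, (0)%zz); ((0)%zz, (0)%zz); ((0)%zz, (0)%zz); ((0)%zz, (0)%zz); ((0)%zz, (0)%zz); ((0)%zz, (0)%zz); ((0)%zz, (0)%zz); ((0)%zz, (0)%zz); ((0)%zz, (0)%zz); ((0)%zz, (0)%zz); ((0)%zz, (0)%zz); ((0)%zz, (0)%zz)]; [:: ((0)%zz, (0)%zz); ((0)%zz, (0)%zz); ((0)%zz,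 (0)%zz); ((0)%zz, (0)%zz); ((0)%zz, (0)%zz); ((0)%zz, (0)%zz); ((0)%zz, (0)%zz); ((0)%zz, (0)%zz); ((2)%zz, (3)%zz); ((1)%zz, (4)%zz); ((0)%zz, (2)%zz); ((-34)%zz, (-105)%zz)]; [:: ((0)%zz, (0)%zz); ((0)%zz, (0)%zz); ((0)%zz, (0)%zz); ((0)%zz, (0)%zz); ((0)%zz, (0)%zz); ((0)%zz, (0)%zz); ((0)%zz, (0)%zz); ((0)%zz, (0)%zz); ((0)%zz, (0)%zz); ((0)%zz, (0)%zz); ((0)%zz, (0)%zz); ((0)%zz, (0)%zz)]; [:: ((0)%zz, (0)%zz); ((0)%zz, (0)%zz); ((0)%zz, (0)%zz); ((0)%zz, (0)%zz); ((0)%zz, (0)%zz); ((0)%zz, (0)%zz); ((0)%zz, (0)%zz); ((0)%zz, (0)%zz); ((-2)%zz, (-2)%zz); ((0)%zz, (-1)%zz); ((3)%zz, (-3)%zz); ((41)%zz, (70)%zz)]; [:: ((0)%zz, (0)%zz); ((0)%zz, (0)%zz); ((0)%zz, (0)%zz); ((0)%zz, (0)%zz); ((0)%zz, (0)%zz); ((0)%zz, (0)%zz); ((0)%zz, (0)%zz); ((0)%zz, (0)%zz); ((0)%zz, (0)%zz); ((0)%zz, (0)%zz); ((0)%zz, (0)%zz); ((0)%zz, (0)%zz)]; [:: ((0)%zz, (0)%zz); ((0)%zz, (0)%zz); ((0)%zz, (0)%zz); ((0)%zz, (0)%zz); ((0)%zz, (0)%zz); ((0)%zz, (0)%zz); ((0)%zz,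 (0)%zz); ((0)%zz, (0)%zz); ((1)%zz, (0)%zz); ((0)%zz, (0)%zz); ((-1)%zz, (0)%zz); ((1)%zz, (0)%zz)]; [:: ((0)%zz, (0)%zz); ((0)%zz, (0)%zz); ((0)%zz, (0)%zz); ((0)%zz, (0)%zz); ((0)%zz, (0)%zz); ((0)%zz, (0)%zz); ((0)%zz, (0)%zz); ((0)%zz, (0)%zz); ((0)%zz, (0)%zz); ((0)%zz, (0)%zz); ((0)%zz, (0)%zz); ((0)%zz, (0)%zz)]; [:: ((0)%zz, (0)%zz); ((0)%zz, (0)%zz); ((0)%zz, (0)%zz); ((0)%zz, (0)%zz); ((0)%zz, (0)%zz); ((0)%zz, (0)%zz); ((0)%zz, (0)%zz); ((0)%zz, (0)%zz); ((0)%zz, (0)%zz); ((0)%zz, (0)%zz); ((1)%zz, (0)%zz); ((-1)%zz, (0)%zz)]; [:: ((0)%zz, (0)%zz); ((0)%zz, (0)%zz); ((0)%zz, (0)%zz); ((0)%zz, (0)%zz); ((0)%zz, (0)%zz); ((0)%zz, (0)%zz); ((0)%zz, (0)%zz); ((0)%zz, (0)%zz); ((0)%zz, (0)%zz); ((0)%zz, (0)%zz); ((0)%zz, (0)%zz); ((0)%zz, (0)%zz)]; [:: ((0)%zz, (0)%zz); ((0)%zz, (0)%zz); ((0)%zz, (0)%zz); ((0)%zz, (0)%zz); ((0)%zz, (0)%zz); ((0)%zz, (0)%zz); ((0)%zz, (0)%zz); ((0)%zz, (0)%zz); ((0)%zz, (0)%zz); ((0)%zz, (0)%zz); ((0)%zz,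 (0)%zz); ((1)%zz, (0)%zz)]; [:: ((0)%zz, (0)%zz); ((0)%zz, (0)%zz); ((0)%zz, (0)%zz); ((0)%zz, (0)%zz); ((0)%zz, (0)%zz); ((0)%zz, (0)%zz); ((0)%zz, (0)%zz); ((0)%zz, (0)%zz); ((0)%zz, (0)%zz); ((0)%zz, (0)%zz); ((0)%zz, (0)%zz); ((0)%zz, (0)%zz)]; [:: ((0)%zz, (0)%zz); ((0)%zz, (0)%zz); ((0)%zz, (0)%zz); ((0)%zz, (0)%zz); ((0)%zz, (0)%zz); ((0)%zz, (0)%zz); ((0)%zz, (0)%zz); ((0)%zz, (0)%zz); ((0)%zz, (0)%zz); ((0)%zz, (0)%zz); ((0)%zz, (0)%zz); ((0)%zz, (0)%zz)]; [:: ((0)%zz, (0)%zz); ((0)%zz, (0)%zz); ((0)%zz, (0)%zz); ((0)%zz, (0)%zz); ((0)%zz, (0)%zz); ((0)%zz, (0)%zz); ((0)%zz, (0)%zz); ((0)%zz, (0)%zz); ((0)%zz, (0)%zz); ((0)%zz, (0)%zz); ((0)%zz, (0)%zz); ((0)%zz, (0)%zz)]; [:: ((0)%zz, (0)%zz); ((0)%zz, (0)%zz); ((0)%zz, (0)%zz); ((0)%zz, (0)%zz); ((0)%zz, (0)%zz); ((0)%zz, (0)%zz); ((0)%zz, (0)%zz); ((0)%zz, (0)%zz); ((0)%zz, (0)%zz); ((0)%zz, (0)%zz); ((0)%zz, (0)%zz); ((0)%zz, (0)%zz)]; [:: ((0)%zz, (0)%zz); ((0)%zz, (0)%zz); ((0)%zz,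 (0)%zz); ((0)%zz, (0)%zz); ((0)%zz, (0)%zz); ((0)%zz, (0)%zz); ((0)%zz, (0)%zz); ((0)%zz, (0)%zz); ((0)%zz, (0)%zz); ((0)%zz, (0)%zz); ((0)%zz, (0)%zz); ((0)%zz, (0)%zz)]; [:: ((0)%zz, (0)%zz); ((0)%zz, (0)%zz); ((0)%zz, (0)%zz); ((0)%zz, (0)%zz); ((0)%zz, (0)%zz); ((0)%zz, (0)%zz); ((0)%zz, (0)%zz); ((0)%zz, (0)%zz); ((0)%zz, (0)%zz); ((0)%zz, (0)%zz); ((0)%zz, (0)%zz); ((0)%zz, (0)%zz)]; [:: ((0)%zz, (0)%zz); ((0)%zz, (0)%zz); ((0)%zz, (0)%zz); ((0)%zz, (0)%zz); ((0)%zz, (0)%zz); ((0)%zz, (0)%zz); ((0)%zz, (0)%zz); ((0)%zz, (0)%zz); ((0)%zz, (0)%zz); ((0)%zz, (0)%zz); ((0)%zz, (0)%zz); ((0)%zz, (0)%zz)]; [:: ((0)%zz, (0)%zz); ((0)%zz, (0)%zz); ((0)%zz, (0)%zz); ((0)%zz, (0)%zz); ((0)%zz, (0)%zz); ((0)%zz, (0)%zz); ((0)%zz, (0)%zz); ((0)%zz, (0)%zz); ((0)%zz, (0)%zz); ((0)%zz, (0)%zz); ((0)%zz, (0)%zz); ((0)%zz, (0)%zz)]; [:: ((0)%zz, (0)%zz); ((0)%zz, (0)%zz); ((0)%zz, (0)%zz); ((0)%zz, (0)%zz); ((0)%zz, (0)%zz); ((0)%zz, (0)%zz); ((0)%zz,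 (0)%zz); ((0)%zz, (0)%zz); ((0)%zz, (0)%zz); ((0)%zz, (0)%zz); ((0)%zz, (0)%zz); ((0)%zz, (0)%zz)]; [:: ((0)%zz, (0)%zz); ((0)%zz, (0)%zz); ((0)%zz, (0)%zz); ((0)%zz, (0)%zz); ((0)%zz, (0)%zz); ((0)%zz, (0)%zz); ((0)%zz, (0)%zz); ((0)%zz, (0)%zz); ((0)%zz, (0)%zz); ((0)%zz, (0)%zz); ((0)%zz, (0)%zz); ((0)%zz, (0)%zz)]; [:: ((0)%zz, (0)%zz); ((0)%zz, (0)%zz); ((0)%zz, (0)%zz); ((0)%zz, (0)%zz); ((0)%zz, (0)%zz); ((0)%zz, (0)%zz); ((0)%zz, (0)%zz); ((0)%zz, (0)%zz); ((0)%zz, (0)%zz); ((0)%zz, (0)%zz); ((0)%zz, (0)%zz); ((0)%zz, (0)%zz)]; [:: ((0)%zz, (0)%zz); ((0)%zz, (0)%zz); ((0)%zz, (0)%zz); ((0)%zz, (0)%zz); ((0)%zz, (0)%zz); ((0)%zz, (0)%zz); ((0)%zz, (0)%zz); ((0)%zz, (0)%zz); ((0)%zz, (0)%zz); ((0)%zz, (0)%zz); ((0)%zz, (0)%zz); ((0)%zz, (0)%zz)]; [:: ((0)%zz, (0)%zz); ((0)%zz, (0)%zz); ((0)%zz, (0)%zz); ((0)%zz, (0)%zz); ((0)%zz, (0)%zz); ((0)%zz, (0)%zz); ((0)%zz, (0)%zz); ((0)%zz, (0)%zz); ((0)%zz, (0)%zz); ((0)%zz, (0)%zz); ((1)%zz,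 (0)%zz); ((-1)%zz, (0)%zz)]; [:: ((0)%zz, (0)%zz); ((0)%zz, (0)%zz); ((0)%zz, (0)%zz); ((0)%zz, (0)%zz); ((0)%zz, (0)%zz); ((0)%zz, (0)%zz); ((0)%zz, (0)%zz); ((0)%zz, (0)%zz); ((0)%zz, (0)%zz); ((0)%zz, (0)%zz); ((0)%zz, (0)%zz); ((0)%zz, (0)%zz)]; [:: ((0)%zz, (0)%zz); ((0)%zz, (0)%zz); ((0)%zz, (0)%zz); ((0)%zz, (0)%zz); ((0)%zz, (0)%zz); ((0)%zz, (0)%zz); ((0)%zz, (0)%zz); ((0)%zz, (0)%zz); ((-2)%zz, (-2)%zz); ((-7)%zz, (0)%zz); ((-3)%zz, (-4)%zz); ((142)%zz, (70)%zz)]; [:: ((0)%zz, (0)%zz); ((0)%zz, (0)%zz); ((0)%zz, (0)%zz); ((0)%zz, (0)%zz); ((0)%zz, (0)%zz); ((0)%zz, (0)%zz); ((0)%zz, (0)%zz); ((0)%zz, (0)%zz); ((0)%zz, (0)%zz); ((0)%zz, (0)%zz); ((0)%zz, (0)%zz); ((0)%zz, (0)%zz)]; [:: ((0)%zz, (0)%zz); ((0)%zz, (0)%zz); ((0)%zz, (0)%zz); ((0)%zz, (0)%zz); ((0)%zz, (0)%zz); ((0)%zz, (0)%zz); ((0)%zz, (0)%zz); ((0)%zz, (0)%zz); ((-6)%zz, (-16)%zz); ((-9)%zz, (-7)%zz); ((-15)%zz, (8)%zz); ((354)%zz, (329)%zz)]; [:: ((0)%zz, (0)%zz); ((0)%zz,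 (0)%zz); ((0)%zz, (0)%zz); ((0)%zz, (0)%zz); ((0)%zz, (0)%zz); ((0)%zz, (0)%zz); ((0)%zz, (0)%zz); ((0)%zz, (0)%zz); ((0)%zz, (0)%zz); ((0)%zz, (0)%zz); ((0)%zz, (0)%zz); ((0)%zz, (0)%zz)]; [:: ((0)%zz, (0)%zz); ((0)%zz, (0)%zz); ((0)%zz, (0)%zz); ((0)%zz, (0)%zz); ((0)%zz, (0)%zz); ((0)%zz, (0)%zz); ((0)%zz, (0)%zz); ((0)%zz, (0)%zz); ((4)%zz, (14)%zz); ((13)%zz, (0)%zz); ((16)%zz, (-5)%zz); ((-227)%zz, (-259)%zz)]; [:: ((0)%zz, (0)%zz); ((0)%zz, (0)%zz); ((0)%zz, (0)%zz); ((0)%zz, (0)%zz); ((0)%zz, (0)%zz); ((0)%zz, (0)%zz); ((0)%zz, (0)%zz); ((0)%zz, (0)%zz); ((0)%zz, (0)%zz); ((0)%zz, (0)%zz); ((0)%zz, (0)%zz); ((0)%zz, (0)%zz)]; [:: ((0)%zz, (0)%zz); ((0)%zz, (0)%zz); ((0)%zz, (0)%zz); ((0)%zz, (0)%zz); ((0)%zz, (0)%zz); ((0)%zz, (0)%zz); ((0)%zz, (0)%zz); ((0)%zz, (0)%zz); ((-2)%zz, (-2)%zz); ((-7)%zz, (0)%zz); ((-3)%zz, (-4)%zz); ((142)%zz, (70)%zz)]; [:: ((0)%zz, (0)%zz); ((0)%zz, (0)%zz); ((0)%zz, (0)%zz); ((0)%zz, (0)%zz); ((0)%zz, (0)%zz);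 ((0)%zz, (0)%zz); ((0)%zz, (0)%zz); ((0)%zz, (0)%zz); ((0)%zz, (0)%zz); ((0)%zz, (0)%zz); ((0)%zz, (0)%zz); ((0)%zz, (0)%zz)]; [:: ((0)%zz, (0)%zz); ((0)%zz, (0)%zz); ((0)%zz, (0)%zz); ((0)%zz, (0)%zz); ((0)%zz, (0)%zz); ((0)%zz, (0)%zz); ((0)%zz, (0)%zz); ((0)%zz, (0)%zz); ((0)%zz, (0)%zz); ((1)%zz, (0)%zz); ((0)%zz, (0)%zz); ((-1)%zz, (0)%zz)]; [:: ((0)%zz, (0)%zz); ((0)%zz, (0)%zz); ((0)%zz, (0)%zz); ((0)%zz, (0)%zz); ((0)%zz, (0)%zz); ((0)%zz, (0)%zz); ((0)%zz, (0)%zz); ((0)%zz, (0)%zz); ((0)%zz, (0)%zz); ((0)%zz, (0)%zz); ((0)%zz, (0)%zz); ((0)%zz, (0)%zz)]; [:: ((0)%zz, (0)%zz); ((0)%zz, (0)%zz); ((0)%zz, (0)%zz); ((0)%zz, (0)%zz); ((0)%zz, (0)%zz); ((0)%zz, (0)%zz); ((0)%zz, (0)%zz); ((0)%zz, (0)%zz); ((0)%zz, (0)%zz); ((0)%zz, (0)%zz); ((0)%zz, (0)%zz); ((0)%zz, (0)%zz)]; [:: ((0)%zz, (0)%zz); ((0)%zz, (0)%zz); ((0)%zz, (0)%zz); ((0)%zz, (0)%zz); ((0)%zz, (0)%zz); ((0)%zz, (0)%zz); ((0)%zz, (0)%zz); ((0)%zz, (0)%zz); ((0)%zz, (0)%zz);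 ((0)%zz, (0)%zz); ((0)%zz, (0)%zz); ((0)%zz, (0)%zz)]; [:: ((0)%zz, (0)%zz); ((0)%zz, (0)%zz); ((0)%zz, (0)%zz); ((0)%zz, (0)%zz); ((0)%zz, (0)%zz); ((0)%zz, (0)%zz); ((0)%zz, (0)%zz); ((0)%zz, (0)%zz); ((0)%zz, (0)%zz); ((0)%zz, (0)%zz); ((0)%zz, (0)%zz); ((0)%zz, (0)%zz)]; [:: ((0)%zz, (0)%zz); ((0)%zz, (0)%zz); ((0)%zz, (0)%zz); ((0)%zz, (0)%zz); ((0)%zz, (0)%zz); ((0)%zz, (0)%zz); ((0)%zz, (0)%zz); ((0)%zz, (0)%zz); ((0)%zz, (0)%zz); ((0)%zz, (0)%zz); ((0)%zz, (0)%zz); ((0)%zz, (0)%zz)]; [:: ((0)%zz, (0)%zz); ((0)%zz, (0)%zz); ((0)%zz, (0)%zz); ((0)%zz, (0)%zz); ((0)%zz, (0)%zz); ((0)%zz, (0)%zz); ((0)%zz, (0)%zz); ((0)%zz, (0)%zz); ((0)%zz, (0)%zz); ((0)%zz, (0)%zz); ((0)%zz, (0)%zz); ((0)%zz, (0)%zz)]; [:: ((0)%zz, (0)%zz); ((0)%zz, (0)%zz); ((0)%zz, (0)%zz); ((0)%zz, (0)%zz); ((0)%zz, (0)%zz); ((0)%zz, (0)%zz); ((0)%zz, (0)%zz); ((0)%zz, (0)%zz); ((0)%zz, (0)%zz); ((0)%zz, (0)%zz); ((0)%zz, (0)%zz); ((0)%zz, (0)%zz)]; [:: ((0)%zz, (0)%zz);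 ((0)%zz, (0)%zz); ((0)%zz, (0)%zz); ((0)%zz, (0)%zz); ((0)%zz, (0)%zz); ((0)%zz, (0)%zz); ((0)%zz, (0)%zz); ((0)%zz, (0)%zz); ((0)%zz, (0)%zz); ((0)%zz, (0)%zz); ((0)%zz, (0)%zz); ((0)%zz, (0)%zz)]; [:: ((0)%zz, (0)%zz); ((0)%zz, (0)%zz); ((0)%zz, (0)%zz); ((0)%zz, (0)%zz); ((0)%zz, (0)%zz); ((0)%zz, (0)%zz); ((0)%zz, (0)%zz); ((0)%zz, (0)%zz); ((0)%zz, (0)%zz); ((0)%zz, (0)%zz); ((0)%zz, (0)%zz); ((0)%zz, (0)%zz)]; [:: ((0)%zz, (0)%zz); ((0)%zz, (0)%zz); ((0)%zz, (0)%zz); ((0)%zz, (0)%zz); ((0)%zz, (0)%zz); ((0)%zz, (0)%zz); ((0)%zz, (0)%zz); ((0)%zz, (0)%zz); ((0)%zz, (0)%zz); ((0)%zz, (0)%zz); ((0)%zz, (0)%zz); ((0)%zz, (0)%zz)]; [:: ((0)%zz, (0)%zz); ((0)%zz, (0)%zz); ((0)%zz, (0)%zz); ((0)%zz, (0)%zz); ((0)%zz, (0)%zz); ((0)%zz, (0)%zz); ((0)%zz, (0)%zz); ((0)%zz, (0)%zz); ((1)%zz, (0)%zz); ((0)%zz, (0)%zz); ((-1)%zz, (0)%zz); ((1)%zz, (0)%zz)]; [:: ((0)%zz, (0)%zz); ((0)%zz, (0)%zz); ((0)%zz, (0)%zz); ((0)%zz, (0)%zz); ((0)%zz, (0)%zz);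 ((0)%zz, (0)%zz); ((0)%zz, (0)%zz); ((0)%zz, (0)%zz); ((0)%zz, (0)%zz); ((0)%zz, (0)%zz); ((0)%zz, (0)%zz); ((0)%zz, (0)%zz)]; [:: ((0)%zz, (0)%zz); ((0)%zz, (0)%zz); ((0)%zz, (0)%zz); ((0)%zz, (0)%zz); ((0)%zz, (0)%zz); ((0)%zz, (0)%zz); ((0)%zz, (0)%zz); ((0)%zz, (0)%zz); ((4)%zz, (14)%zz); ((13)%zz, (0)%zz); ((16)%zz, (-5)%zz); ((-227)%zz, (-259)%zz)]; [:: ((0)%zz, (0)%zz); ((0)%zz, (0)%zz); ((0)%zz, (0)%zz); ((0)%zz, (0)%zz); ((0)%zz, (0)%zz); ((0)%zz, (0)%zz); ((0)%zz, (0)%zz); ((0)%zz, (0)%zz); ((0)%zz, (0)%zz); ((0)%zz, (0)%zz); ((0)%zz, (0)%zz); ((0)%zz, (0)%zz)]; [:: ((0)%zz, (0)%zz); ((0)%zz, (0)%zz); ((0)%zz, (0)%zz); ((0)%zz, (0)%zz); ((0)%zz, (0)%zz); ((0)%zz, (0)%zz); ((0)%zz, (0)%zz); ((0)%zz, (0)%zz); ((10)%zz, (10)%zz); ((30)%zz, (-5)%zz); ((5)%zz, (25)%zz); ((-365)%zz, (-350)%zz)]; [:: ((0)%zz, (0)%zz); ((0)%zz, (0)%zz); ((0)%zz, (0)%zz); ((0)%zz, (0)%zz); ((0)%zz, (0)%zz); ((0)%zz, (0)%zz); ((0)%zz, (0)%zz); ((0)%zz, (0)%zz); ((0)%zz,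 (0)%zz); ((0)%zz, (0)%zz); ((0)%zz, (0)%zz); ((0)%zz, (0)%zz)]; [:: ((0)%zz, (0)%zz); ((0)%zz, (0)%zz); ((0)%zz, (0)%zz); ((0)%zz, (0)%zz); ((0)%zz, (0)%zz); ((0)%zz, (0)%zz); ((0)%zz, (0)%zz); ((0)%zz, (0)%zz); ((-6)%zz, (-16)%zz); ((-9)%zz, (-7)%zz); ((-15)%zz, (8)%zz); ((354)%zz, (329)%zz)]; [:: ((0)%zz, (0)%zz); ((0)%zz, (0)%zz); ((0)%zz, (0)%zz); ((0)%zz, (0)%zz); ((0)%zz, (0)%zz); ((0)%zz, (0)%zz); ((0)%zz, (0)%zz); ((0)%zz, (0)%zz); ((0)%zz, (0)%zz); ((0)%zz, (0)%zz); ((0)%zz, (0)%zz); ((0)%zz, (0)%zz)]; [:: ((0)%zz, (0)%zz); ((0)%zz, (0)%zz); ((0)%zz, (0)%zz); ((0)%zz, (0)%zz); ((0)%zz, (0)%zz); ((0)%zz, (0)%zz); ((0)%zz, (0)%zz); ((0)%zz, (0)%zz); ((2)%zz, (3)%zz); ((1)%zz, (4)%zz); ((0)%zz, (2)%zz); ((-34)%zz, (-105)%zz)]; [:: ((0)%zz, (0)%zz); ((0)%zz, (0)%zz); ((0)%zz, (0)%zz); ((0)%zz, (0)%zz); ((0)%zz, (0)%zz); ((0)%zz, (0)%zz); ((0)%zz, (0)%zz); ((0)%zz, (0)%zz); ((0)%zz, (0)%zz); ((0)%zz, (0)%zz); ((0)%zz, (0)%zz); ((0)%zz, (0)%zz)];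 [:: ((0)%zz, (0)%zz); ((0)%zz, (0)%zz); ((0)%zz, (0)%zz); ((0)%zz, (0)%zz); ((0)%zz, (0)%zz); ((0)%zz, (0)%zz); ((0)%zz, (0)%zz); ((0)%zz, (0)%zz); ((0)%zz, (0)%zz); ((0)%zz, (0)%zz); ((0)%zz, (0)%zz); ((0)%zz, (0)%zz)]; [:: ((0)%zz, (0)%zz); ((0)%zz, (0)%zz); ((0)%zz, (0)%zz); ((0)%zz, (0)%zz); ((0)%zz, (0)%zz); ((0)%zz, (0)%zz); ((0)%zz, (0)%zz); ((0)%zz, (0)%zz); ((0)%zz, (0)%zz); ((0)%zz, (0)%zz); ((0)%zz, (0)%zz); ((0)%zz, (0)%zz)]; [:: ((0)%zz, (0)%zz); ((0)%zz, (0)%zz); ((0)%zz, (0)%zz); ((0)%zz, (0)%zz); ((0)%zz, (0)%zz); ((0)%zz, (0)%zz); ((0)%zz, (0)%zz); ((0)%zz, (0)%zz); ((0)%zz, (0)%zz); ((0)%zz, (0)%zz); ((0)%zz, (0)%zz); ((0)%zz, (0)%zz)]; [:: ((0)%zz, (0)%zz); ((0)%zz, (0)%zz); ((0)%zz, (0)%zz); ((0)%zz, (0)%zz); ((0)%zz, (0)%zz); ((0)%zz, (0)%zz); ((0)%zz, (0)%zz); ((0)%zz, (0)%zz); ((0)%zz, (0)%zz); ((0)%zz, (0)%zz); ((0)%zz, (0)%zz); ((0)%zz, (0)%zz)]; [:: ((0)%zz, (0)%zz); ((0)%zz, (0)%zz); ((0)%zz, (0)%zz); ((0)%zz, (0)%zz);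 ((0)%zz, (0)%zz); ((0)%zz, (0)%zz); ((0)%zz, (0)%zz); ((0)%zz, (0)%zz); ((0)%zz, (0)%zz); ((0)%zz, (0)%zz); ((0)%zz, (0)%zz); ((0)%zz, (0)%zz)]; [:: ((0)%zz, (0)%zz); ((0)%zz, (0)%zz); ((0)%zz, (0)%zz); ((0)%zz, (0)%zz); ((0)%zz, (0)%zz); ((0)%zz, (0)%zz); ((0)%zz, (0)%zz); ((0)%zz, (0)%zz); ((0)%zz, (0)%zz); ((0)%zz, (0)%zz); ((0)%zz, (0)%zz); ((0)%zz, (0)%zz)]; [:: ((0)%zz, (0)%zz); ((0)%zz, (0)%zz); ((0)%zz, (0)%zz); ((0)%zz, (0)%zz); ((0)%zz, (0)%zz); ((0)%zz, (0)%zz); ((0)%zz, (0)%zz); ((0)%zz, (0)%zz); ((0)%zz, (0)%zz); ((0)%zz, (0)%zz); ((0)%zz, (0)%zz); ((0)%zz, (0)%zz)]; [:: ((0)%zz, (0)%zz); ((0)%zz, (0)%zz); ((0)%zz, (0)%zz); ((0)%zz, (0)%zz); ((0)%zz, (0)%zz); ((0)%zz, (0)%zz); ((0)%zz, (0)%zz); ((0)%zz, (0)%zz); ((-2)%zz, (-2)%zz); ((0)%zz, (-1)%zz); ((3)%zz, (-3)%zz); ((41)%zz, (70)%zz)]; [:: ((0)%zz, (0)%zz); ((0)%zz, (0)%zz); ((0)%zz, (0)%zz); ((0)%zz, (0)%zz); ((0)%zz, (0)%zz); ((0)%zz, (0)%zz); ((0)%zz, (0)%zz); ((0)%zz, (0)%zz);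 ((0)%zz, (0)%zz); ((0)%zz, (0)%zz); ((0)%zz, (0)%zz); ((0)%zz, (0)%zz)]; [:: ((0)%zz, (0)%zz); ((0)%zz, (0)%zz); ((0)%zz, (0)%zz); ((0)%zz, (0)%zz); ((0)%zz, (0)%zz); ((0)%zz, (0)%zz); ((0)%zz, (0)%zz); ((0)%zz, (0)%zz); ((-6)%zz, (-16)%zz); ((-9)%zz, (-7)%zz); ((-15)%zz, (8)%zz); ((354)%zz, (329)%zz)]; [:: ((0)%zz, (0)%zz); ((0)%zz, (0)%zz); ((0)%zz, (0)%zz); ((0)%zz, (0)%zz); ((0)%zz, (0)%zz); ((0)%zz, (0)%zz); ((0)%zz, (0)%zz); ((0)%zz, (0)%zz); ((0)%zz, (0)%zz); ((0)%zz, (0)%zz); ((0)%zz, (0)%zz); ((0)%zz, (0)%zz)]; [:: ((0)%zz, (0)%zz); ((0)%zz, (0)%zz); ((0)%zz, (0)%zz); ((0)%zz, (0)%zz); ((0)%zz, (0)%zz); ((0)%zz, (0)%zz); ((0)%zz, (0)%zz); ((0)%zz, (0)%zz); ((4)%zz, (14)%zz); ((13)%zz, (0)%zz); ((16)%zz, (-5)%zz); ((-227)%zz, (-259)%zz)]; [:: ((0)%zz, (0)%zz); ((0)%zz, (0)%zz); ((0)%zz, (0)%zz); ((0)%zz, (0)%zz); ((0)%zz, (0)%zz); ((0)%zz, (0)%zz); ((0)%zz, (0)%zz); ((0)%zz, (0)%zz); ((0)%zz, (0)%zz); ((0)%zz, (0)%zz); ((0)%zz, (0)%zz); ((0)%zz,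 (0)%zz)]; [:: ((0)%zz, (0)%zz); ((0)%zz, (0)%zz); ((0)%zz, (0)%zz); ((0)%zz, (0)%zz); ((0)%zz, (0)%zz); ((0)%zz, (0)%zz); ((0)%zz, (0)%zz); ((0)%zz, (0)%zz); ((-2)%zz, (-2)%zz); ((0)%zz, (-1)%zz); ((3)%zz, (-3)%zz); ((41)%zz, (70)%zz)]; [:: ((0)%zz, (0)%zz); ((0)%zz, (0)%zz); ((0)%zz, (0)%zz); ((0)%zz, (0)%zz); ((0)%zz, (0)%zz); ((0)%zz, (0)%zz); ((0)%zz, (0)%zz); ((0)%zz, (0)%zz); ((0)%zz, (0)%zz); ((0)%zz, (0)%zz); ((0)%zz, (0)%zz); ((0)%zz, (0)%zz)]; [:: ((0)%zz, (0)%zz); ((0)%zz, (0)%zz); ((0)%zz, (0)%zz); ((0)%zz, (0)%zz); ((0)%zz, (0)%zz); ((0)%zz, (0)%zz); ((0)%zz, (0)%zz); ((0)%zz, (0)%zz); ((0)%zz, (0)%zz); ((0)%zz, (0)%zz); ((0)%zz, (0)%zz); ((0)%zz, (0)%zz)]; [:: ((0)%zz, (0)%zz); ((0)%zz, (0)%zz); ((0)%zz, (0)%zz); ((0)%zz, (0)%zz); ((0)%zz, (0)%zz); ((0)%zz, (0)%zz); ((0)%zz, (0)%zz); ((0)%zz, (0)%zz); ((0)%zz, (0)%zz); ((0)%zz, (0)%zz); ((0)%zz, (0)%zz); ((0)%zz, (0)%zz)]; [:: ((0)%zz, (0)%zz); ((0)%zz, (0)%zz); ((0)%zz, (0)%zz);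 ((0)%zz, (0)%zz); ((0)%zz, (0)%zz); ((0)%zz, (0)%zz); ((0)%zz, (0)%zz); ((0)%zz, (0)%zz); ((0)%zz, (0)%zz); ((0)%zz, (0)%zz); ((0)%zz, (0)%zz); ((0)%zz, (0)%zz)]; [:: ((0)%zz, (0)%zz); ((0)%zz, (0)%zz); ((0)%zz, (0)%zz); ((0)%zz, (0)%zz); ((0)%zz, (0)%zz); ((0)%zz, (0)%zz); ((0)%zz, (0)%zz); ((0)%zz, (0)%zz); ((0)%zz, (0)%zz); ((0)%zz, (0)%zz); ((0)%zz, (0)%zz); ((0)%zz, (0)%zz)]; [:: ((0)%zz, (0)%zz); ((0)%zz, (0)%zz); ((0)%zz, (0)%zz); ((0)%zz, (0)%zz); ((0)%zz, (0)%zz); ((0)%zz, (0)%zz); ((0)%zz, (0)%zz); ((0)%zz, (0)%zz); ((0)%zz, (0)%zz); ((0)%zz, (0)%zz); ((0)%zz, (0)%zz); ((0)%zz, (0)%zz)]; [:: ((0)%zz, (0)%zz); ((0)%zz, (0)%zz); ((0)%zz, (0)%zz); ((0)%zz, (0)%zz); ((0)%zz, (0)%zz); ((0)%zz, (0)%zz); ((0)%zz, (0)%zz); ((0)%zz, (0)%zz); ((2)%zz, (3)%zz); ((1)%zz, (4)%zz); ((0)%zz, (2)%zz); ((-34)%zz, (-105)%zz)]; [:: ((0)%zz, (0)%zz); ((0)%zz, (0)%zz); ((0)%zz, (0)%zz); ((0)%zz, (0)%zz); ((0)%zz, (0)%zz); ((0)%zz, (0)%zz); ((0)%zz, (0)%zz);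 ((0)%zz, (0)%zz); ((0)%zz, (0)%zz); ((0)%zz, (0)%zz); ((0)%zz, (0)%zz); ((0)%zz, (0)%zz)]; [:: ((0)%zz, (0)%zz); ((0)%zz, (0)%zz); ((0)%zz, (0)%zz); ((0)%zz, (0)%zz); ((0)%zz, (0)%zz); ((0)%zz, (0)%zz); ((0)%zz, (0)%zz); ((0)%zz, (0)%zz); ((-2)%zz, (-2)%zz); ((-7)%zz, (0)%zz); ((-3)%zz, (-4)%zz); ((142)%zz, (70)%zz)]; [:: ((0)%zz, (0)%zz); ((0)%zz, (0)%zz); ((0)%zz, (0)%zz); ((0)%zz, (0)%zz); ((0)%zz, (0)%zz); ((0)%zz, (0)%zz); ((0)%zz, (0)%zz); ((0)%zz, (0)%zz); ((0)%zz, (0)%zz); ((0)%zz, (0)%zz); ((0)%zz, (0)%zz); ((0)%zz, (0)%zz)]; [:: ((0)%zz, (0)%zz); ((0)%zz, (0)%zz); ((0)%zz, (0)%zz); ((0)%zz, (0)%zz); ((0)%zz, (0)%zz); ((0)%zz, (0)%zz); ((0)%zz, (0)%zz); ((0)%zz, (0)%zz); ((1)%zz, (0)%zz); ((0)%zz, (0)%zz); ((-1)%zz, (0)%zz); ((1)%zz, (0)%zz)]; [:: ((0)%zz, (0)%zz); ((0)%zz, (0)%zz); ((0)%zz, (0)%zz); ((0)%zz, (0)%zz); ((0)%zz, (0)%zz); ((0)%zz, (0)%zz); ((0)%zz, (0)%zz); ((0)%zz, (0)%zz); ((0)%zz, (0)%zz); ((0)%zz, (0)%zz); ((0)%zz,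 (0)%zz); ((0)%zz, (0)%zz)]; [:: ((0)%zz, (0)%zz); ((0)%zz, (0)%zz); ((0)%zz, (0)%zz); ((0)%zz, (0)%zz); ((0)%zz, (0)%zz); ((0)%zz, (0)%zz); ((0)%zz, (0)%zz); ((0)%zz, (0)%zz); ((0)%zz, (0)%zz); ((0)%zz, (0)%zz); ((0)%zz, (0)%zz); ((0)%zz, (0)%zz)]; [:: ((0)%zz, (0)%zz); ((0)%zz, (0)%zz); ((0)%zz, (0)%zz); ((0)%zz, (0)%zz); ((0)%zz, (0)%zz); ((0)%zz, (0)%zz); ((0)%zz, (0)%zz); ((0)%zz, (0)%zz); ((0)%zz, (0)%zz); ((0)%zz, (0)%zz); ((0)%zz, (0)%zz); ((0)%zz, (0)%zz)]; [:: ((0)%zz, (0)%zz); ((0)%zz, (0)%zz); ((0)%zz, (0)%zz); ((0)%zz, (0)%zz); ((0)%zz, (0)%zz); ((0)%zz, (0)%zz); ((0)%zz, (0)%zz); ((0)%zz, (0)%zz); ((0)%zz, (0)%zz); ((0)%zz, (0)%zz); ((0)%zz, (0)%zz); ((0)%zz, (0)%zz)]; [:: ((0)%zz, (0)%zz); ((0)%zz, (0)%zz); ((0)%zz, (0)%zz); ((0)%zz, (0)%zz); ((0)%zz, (0)%zz); ((0)%zz, (0)%zz); ((0)%zz, (0)%zz); ((0)%zz, (0)%zz); ((0)%zz, (0)%zz); ((1)%zz, (0)%zz); ((0)%zz, (0)%zz); ((-1)%zz, (0)%zz)]; [:: ((0)%zz, (0)%zz); ((0)%zz, (0)%zz); ((0)%zz,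 (0)%zz); ((0)%zz, (0)%zz); ((0)%zz, (0)%zz); ((0)%zz, (0)%zz); ((0)%zz, (0)%zz); ((0)%zz, (0)%zz); ((0)%zz, (0)%zz); ((0)%zz, (0)%zz); ((0)%zz, (0)%zz); ((0)%zz, (0)%zz)]; [:: ((0)%zz, (0)%zz); ((0)%zz, (0)%zz); ((0)%zz, (0)%zz); ((0)%zz, (0)%zz); ((0)%zz, (0)%zz); ((0)%zz, (0)%zz); ((0)%zz, (0)%zz); ((0)%zz, (0)%zz); ((0)%zz, (0)%zz); ((0)%zz, (0)%zz); ((1)%zz, (0)%zz); ((-1)%zz, (0)%zz)]; [:: ((0)%zz, (0)%zz); ((0)%zz, (0)%zz); ((0)%zz, (0)%zz); ((0)%zz, (0)%zz); ((0)%zz, (0)%zz); ((0)%zz, (0)%zz); ((0)%zz, (0)%zz); ((0)%zz, (0)%zz); ((0)%zz, (0)%zz); ((0)%zz, (0)%zz); ((0)%zz, (0)%zz); ((0)%zz, (0)%zz)]; [:: ((0)%zz, (0)%zz); ((0)%zz, (0)%zz); ((0)%zz, (0)%zz); ((0)%zz, (0)%zz); ((0)%zz, (0)%zz); ((0)%zz, (0)%zz); ((0)%zz, (0)%zz); ((0)%zz, (0)%zz); ((0)%zz, (0)%zz); ((0)%zz, (0)%zz); ((0)%zz, (0)%zz); ((0)%zz, (0)%zz)]; [:: ((0)%zz, (0)%zz); ((0)%zz, (0)%zz); ((0)%zz, (0)%zz); ((0)%zz, (0)%zz); ((0)%zz, (0)%zz); ((0)%zz, (0)%zz); ((0)%zz,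 (0)%zz); ((0)%zz, (0)%zz); ((0)%zz, (0)%zz); ((0)%zz, (0)%zz); ((0)%zz, (0)%zz); ((1)%zz, (0)%zz)]].
Definition Dg14 : BinNums.Z := (1)%zz.
Definition cert14 : seq (BinNums.Z * seq zt) := [:: ((1)%zz, [:: ((0)%zz, (0)%zz); ((0)%zz, (0)%zz); ((0)%zz, (0)%zz); ((0)%zz, (0)%zz); ((0)%zz, (0)%zz); ((0)%zz, (0)%zz); ((0)%zz, (0)%zz); ((0)%zz, (0)%zz)]); ((1)%zz, [:: ((0)%zz, (0)%zz); ((0)%zz, (0)%zz); ((0)%zz, (0)%zz); ((0)%zz, (0)%zz); ((0)%zz, (0)%zz); ((0)%zz, (0)%zz); ((0)%zz, (0)%zz); ((0)%zz, (0)%zz)]); ((1)%zz, [:: ((0)%zz, (0)%zz); ((0)%zz, (0)%zz); ((0)%zz, (0)%zz); ((0)%zz, (0)%zz); ((0)%zz, (0)%zz); ((0)%zz, (0)%zz); ((0)%zz, (0)%zz); ((0)%zz, (0)%zz)]); ((1)%zz, [:: ((0)%zz, (0)%zz); ((0)%zz, (0)%zz); ((0)%zz, (0)%zz); ((0)%zz, (0)%zz); ((0)%zz, (0)%zz); ((0)%zz, (0)%zz); ((0)%zz, (0)%zz); ((0)%zz, (0)%zz)]); ((1512530110505779200)%zz, [:: ((141437984303242440)%zz, (197370074032864920)%zz); ((-3896905612298622)%zz, (-6580139331287346)%zz); ((4003411726811728)%zz, (6366862178737104)%zz); ((-937678426627833)%zz, (-1492856625296619)%zz); ((-8489352257792)%zz,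 (-12911367263208)%zz); ((-32146499491112)%zz, (-49684878087792)%zz); ((-11709641550)%zz, (-19242324450)%zz); ((25554116854464)%zz, (39931155727584)%zz)]); ((1)%zz, [:: ((0)%zz, (0)%zz); ((0)%zz, (0)%zz); ((0)%zz, (0)%zz); ((0)%zz, (0)%zz); ((0)%zz, (0)%zz); ((0)%zz, (0)%zz); ((0)%zz, (0)%zz); ((0)%zz, (0)%zz)]); ((79606847921356800)%zz, [:: ((-3239007019730460)%zz, (-667528643629980)%zz); ((17065818970728)%zz, (68634677700864)%zz); ((-51080288956532)%zz, (-50645452627616)%zz); ((9682673736852)%zz, (12919607779401)%zz); ((119543384200)%zz, (99039768688)%zz); ((477147406978)%zz, (339447262018)%zz); ((85603500)%zz, (184938000)%zz); ((-346886149614)%zz, (-273929925510)%zz)]); ((1)%zz, [:: ((0)%zz, (0)%zz); ((0)%zz, (0)%zz); ((0)%zz, (0)%zz); ((0)%zz, (0)%zz); ((0)%zz, (0)%zz); ((0)%zz, (0)%zz); ((0)%zz, (0)%zz); ((0)%zz, (0)%zz)]); ((1512530110505779200)%zz, [:: ((17249657108981220)%zz, (-27159812406555840)%zz); ((482839652971434)%zz, (323139854998752)%zz); ((-68401606648056)%zz, (-534815646285668)%zz); ((46457412118191)%zz, (104077915292448)%zz); ((99959995752)%zz, (1160079415840)%zz); ((-410266438626)%zz, (4714393116424)%zz); ((1051036050)%zz, (1130309700)%zz); ((49494677190)%zz, (-3990281369784)%zz)]); ((1)%zz, [:: ((0)%zz, (0)%zz); ((0)%zz, (0)%zz); ((0)%zz,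 (0)%zz); ((0)%zz, (0)%zz); ((0)%zz, (0)%zz); ((0)%zz, (0)%zz); ((0)%zz, (0)%zz); ((0)%zz, (0)%zz)]); ((1)%zz, [:: ((0)%zz, (0)%zz); ((0)%zz, (0)%zz); ((0)%zz, (0)%zz); ((0)%zz, (0)%zz); ((0)%zz, (0)%zz); ((0)%zz, (0)%zz); ((0)%zz, (0)%zz); ((0)%zz, (0)%zz)]); ((1)%zz, [:: ((0)%zz, (0)%zz); ((0)%zz, (0)%zz); ((0)%zz, (0)%zz); ((0)%zz, (0)%zz); ((0)%zz, (0)%zz); ((0)%zz, (0)%zz); ((0)%zz, (0)%zz); ((0)%zz, (0)%zz)]); ((1)%zz, [:: ((0)%zz, (0)%zz); ((0)%zz, (0)%zz); ((0)%zz, (0)%zz); ((0)%zz, (0)%zz); ((0)%zz, (0)%zz); ((0)%zz, (0)%zz); ((0)%zz, (0)%zz); ((0)%zz, (0)%zz)]); ((1)%zz, [:: ((0)%zz, (0)%zz); ((0)%zz, (0)%zz); ((0)%zz, (0)%zz); ((0)%zz, (0)%zz); ((0)%zz, (0)%zz); ((0)%zz, (0)%zz); ((0)%zz, (0)%zz); ((0)%zz, (0)%zz)]); ((1)%zz, [:: ((0)%zz, (0)%zz); ((0)%zz, (0)%zz); ((0)%zz, (0)%zz); ((0)%zz, (0)%zz); ((0)%zz, (0)%zz); ((0)%zz, (0)%zz); ((0)%zz, (0)%zz); ((0)%zz, (0)%zz)]); ((1)%zz, [:: ((0)%zz, (0)%zz); ((0)%zz, (0)%zz); ((0)%zz, (0)%zz);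 ((0)%zz, (0)%zz); ((0)%zz, (0)%zz); ((0)%zz, (0)%zz); ((0)%zz, (0)%zz); ((0)%zz, (0)%zz)]); ((1)%zz, [:: ((0)%zz, (0)%zz); ((0)%zz, (0)%zz); ((0)%zz, (0)%zz); ((0)%zz, (0)%zz); ((0)%zz, (0)%zz); ((0)%zz, (0)%zz); ((0)%zz, (0)%zz); ((0)%zz, (0)%zz)]); ((1)%zz, [:: ((0)%zz, (0)%zz); ((0)%zz, (0)%zz); ((0)%zz, (0)%zz); ((0)%zz, (0)%zz); ((0)%zz, (0)%zz); ((0)%zz, (0)%zz); ((0)%zz, (0)%zz); ((0)%zz, (0)%zz)]); ((1)%zz, [:: ((0)%zz, (0)%zz); ((0)%zz, (0)%zz); ((0)%zz, (0)%zz); ((0)%zz, (0)%zz); ((0)%zz, (0)%zz); ((0)%zz, (0)%zz); ((0)%zz, (0)%zz); ((0)%zz, (0)%zz)]); ((1)%zz, [:: ((0)%zz, (0)%zz); ((0)%zz, (0)%zz); ((0)%zz, (0)%zz); ((0)%zz, (0)%zz); ((0)%zz, (0)%zz); ((0)%zz, (0)%zz); ((0)%zz, (0)%zz); ((0)%zz, (0)%zz)]); ((1)%zz, [:: ((0)%zz, (0)%zz); ((0)%zz, (0)%zz); ((0)%zz, (0)%zz); ((0)%zz, (0)%zz); ((0)%zz, (0)%zz); ((0)%zz, (0)%zz); ((0)%zz, (0)%zz); ((0)%zz, (0)%zz)]); ((1)%zz, [:: ((0)%zz, (0)%zz); ((0)%zz, (0)%zz); ((0)%zz, (0)%zz); ((0)%zz,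 (0)%zz); ((0)%zz, (0)%zz); ((0)%zz, (0)%zz); ((0)%zz, (0)%zz); ((0)%zz, (0)%zz)]); ((1)%zz, [:: ((0)%zz, (0)%zz); ((0)%zz, (0)%zz); ((0)%zz, (0)%zz); ((0)%zz, (0)%zz); ((0)%zz, (0)%zz); ((0)%zz, (0)%zz); ((0)%zz, (0)%zz); ((0)%zz, (0)%zz)]); ((1)%zz, [:: ((0)%zz, (0)%zz); ((0)%zz, (0)%zz); ((0)%zz, (0)%zz); ((0)%zz, (0)%zz); ((0)%zz, (0)%zz); ((0)%zz, (0)%zz); ((0)%zz, (0)%zz); ((0)%zz, (0)%zz)]); ((1)%zz, [:: ((0)%zz, (0)%zz); ((0)%zz, (0)%zz); ((0)%zz, (0)%zz); ((0)%zz, (0)%zz); ((0)%zz, (0)%zz); ((0)%zz, (0)%zz); ((0)%zz, (0)%zz); ((0)%zz, (0)%zz)]); ((1)%zz, [:: ((0)%zz, (0)%zz); ((0)%zz, (0)%zz); ((0)%zz, (0)%zz); ((0)%zz, (0)%zz); ((0)%zz, (0)%zz); ((0)%zz, (0)%zz); ((0)%zz, (0)%zz); ((0)%zz, (0)%zz)]); ((1)%zz, [:: ((0)%zz, (0)%zz); ((0)%zz, (0)%zz); ((0)%zz, (0)%zz); ((0)%zz, (0)%zz); ((0)%zz, (0)%zz); ((0)%zz, (0)%zz); ((0)%zz, (0)%zz); ((0)%zz, (0)%zz)]); ((1)%zz, [:: ((0)%zz, (0)%zz); ((0)%zz, (0)%zz); ((0)%zz, (0)%zz); ((0)%zz, (0)%zz);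 ((0)%zz, (0)%zz); ((0)%zz, (0)%zz); ((0)%zz, (0)%zz); ((0)%zz, (0)%zz)]); ((1)%zz, [:: ((0)%zz, (0)%zz); ((0)%zz, (0)%zz); ((0)%zz, (0)%zz); ((0)%zz, (0)%zz); ((0)%zz, (0)%zz); ((0)%zz, (0)%zz); ((0)%zz, (0)%zz); ((0)%zz, (0)%zz)]); ((1)%zz, [:: ((0)%zz, (0)%zz); ((0)%zz, (0)%zz); ((0)%zz, (0)%zz); ((0)%zz, (0)%zz); ((0)%zz, (0)%zz); ((0)%zz, (0)%zz); ((0)%zz, (0)%zz); ((0)%zz, (0)%zz)]); ((1)%zz, [:: ((0)%zz, (0)%zz); ((0)%zz, (0)%zz); ((0)%zz, (0)%zz); ((0)%zz, (0)%zz); ((0)%zz, (0)%zz); ((0)%zz, (0)%zz); ((0)%zz, (0)%zz); ((0)%zz, (0)%zz)]); ((7562650552528896000)%zz, [:: ((-670271874799269600)%zz, (-329885335451687400)%zz); ((9193437246769380)%zz, (20296357093803120)%zz); ((-8762941504580120)%zz, (-19414484616035080)%zz); ((2483569030165695)%zz, (3978824063841630)%zz); ((24697250869024)%zz, (37751656240352)%zz); ((99747370714792)%zz, (123728251193756)%zz); ((29381831100)%zz, (55891435800)%zz); ((-70220966746824)%zz, (-106704437547732)%zz)]); ((1)%zz, [:: ((0)%zz, (0)%zz); ((0)%zz, (0)%zz); ((0)%zz, (0)%zz); ((0)%zz, (0)%zz); ((0)%zz, (0)%zz); ((0)%zz, (0)%zz); ((0)%zz, (0)%zz); ((0)%zz,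 (0)%zz)]); ((3781325276264448000)%zz, [:: ((-253853246291213250)%zz, (-2355092995956119100)%zz); ((33731251620323400)%zz, (49330845247701105)%zz); ((-33272667306422500)%zz, (-48566263256923170)%zz); ((8331550188868125)%zz, (13252403570807745)%zz); ((78973841758244)%zz, (123000212668932)%zz); ((246788995410947)%zz, (464139236220756)%zz); ((107171849700)%zz, (157018049475)%zz); ((-213702060320829)%zz, (-363257141781492)%zz)]); ((1)%zz, [:: ((0)%zz, (0)%zz); ((0)%zz, (0)%zz); ((0)%zz, (0)%zz); ((0)%zz, (0)%zz); ((0)%zz, (0)%zz); ((0)%zz, (0)%zz); ((0)%zz, (0)%zz); ((0)%zz, (0)%zz)]); ((3781325276264448000)%zz, [:: ((-2659420150733412000)%zz, (853059728476464300)%zz); ((18583881287596350)%zz, (33811013440260210)%zz); ((-11649750062677100)%zz, (-34336416498616540)%zz); ((2015676224241975)%zz, (3458387483677440)%zz); ((6072619775128)%zz, (12234099124784)%zz); ((81243220968004)%zz, (109340223379442)%zz); ((15141333450)%zz, (75835732350)%zz); ((-51555490281708)%zz, (-101654220800334)%zz)]); ((1)%zz, [:: ((0)%zz, (0)%zz); ((0)%zz, (0)%zz); ((0)%zz, (0)%zz); ((0)%zz, (0)%zz); ((0)%zz, (0)%zz); ((0)%zz, (0)%zz); ((0)%zz, (0)%zz); ((0)%zz, (0)%zz)]); ((7562650552528896000)%zz, [:: ((3450345065679906900)%zz, (1321362561963381300)%zz); ((-44831255900421870)%zz, (-84038016082760190)%zz); ((33302150304974980)%zz, (85477663281526560)%zz);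 ((-10009130985057780)%zz, (-16531961928685785)%zz); ((-90566912724824)%zz, (-153507224494392)%zz); ((-322451710127282)%zz, (-565308188935146)%zz); ((-117176554050)%zz, (-234869343150)%zz); ((245082291236694)%zz, (474058110977982)%zz)]); ((1)%zz, [:: ((0)%zz, (0)%zz); ((0)%zz, (0)%zz); ((0)%zz, (0)%zz); ((0)%zz, (0)%zz); ((0)%zz, (0)%zz); ((0)%zz, (0)%zz); ((0)%zz, (0)%zz); ((0)%zz, (0)%zz)]); ((7562650552528896000)%zz, [:: ((-670271874799269600)%zz, (-329885335451687400)%zz); ((9193437246769380)%zz, (20296357093803120)%zz); ((-8762941504580120)%zz, (-19414484616035080)%zz); ((2483569030165695)%zz, (3978824063841630)%zz); ((24697250869024)%zz, (37751656240352)%zz); ((99747370714792)%zz, (123728251193756)%zz); ((29381831100)%zz, (55891435800)%zz); ((-70220966746824)%zz, (-106704437547732)%zz)]); ((1)%zz, [:: ((0)%zz, (0)%zz); ((0)%zz, (0)%zz); ((0)%zz, (0)%zz); ((0)%zz, (0)%zz); ((0)%zz, (0)%zz); ((0)%zz, (0)%zz); ((0)%zz, (0)%zz); ((0)%zz, (0)%zz)]); ((1)%zz, [:: ((0)%zz, (0)%zz); ((0)%zz, (0)%zz); ((0)%zz, (0)%zz); ((0)%zz, (0)%zz); ((0)%zz, (0)%zz); ((0)%zz, (0)%zz); ((0)%zz, (0)%zz); ((0)%zz, (0)%zz)]); ((1)%zz, [:: ((0)%zz, (0)%zz); ((0)%zz, (0)%zz); ((0)%zz, (0)%zz); ((0)%zz,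 (0)%zz); ((0)%zz, (0)%zz); ((0)%zz, (0)%zz); ((0)%zz, (0)%zz); ((0)%zz, (0)%zz)]); ((1)%zz, [:: ((0)%zz, (0)%zz); ((0)%zz, (0)%zz); ((0)%zz, (0)%zz); ((0)%zz, (0)%zz); ((0)%zz, (0)%zz); ((0)%zz, (0)%zz); ((0)%zz, (0)%zz); ((0)%zz, (0)%zz)]); ((1)%zz, [:: ((0)%zz, (0)%zz); ((0)%zz, (0)%zz); ((0)%zz, (0)%zz); ((0)%zz, (0)%zz); ((0)%zz, (0)%zz); ((0)%zz, (0)%zz); ((0)%zz, (0)%zz); ((0)%zz, (0)%zz)]); ((1)%zz, [:: ((0)%zz, (0)%zz); ((0)%zz, (0)%zz); ((0)%zz, (0)%zz); ((0)%zz, (0)%zz); ((0)%zz, (0)%zz); ((0)%zz, (0)%zz); ((0)%zz, (0)%zz); ((0)%zz, (0)%zz)]); ((1)%zz, [:: ((0)%zz, (0)%zz); ((0)%zz, (0)%zz); ((0)%zz, (0)%zz); ((0)%zz, (0)%zz); ((0)%zz, (0)%zz); ((0)%zz, (0)%zz); ((0)%zz, (0)%zz); ((0)%zz, (0)%zz)]); ((1)%zz, [:: ((0)%zz, (0)%zz); ((0)%zz, (0)%zz); ((0)%zz, (0)%zz); ((0)%zz, (0)%zz); ((0)%zz, (0)%zz); ((0)%zz, (0)%zz); ((0)%zz, (0)%zz); ((0)%zz, (0)%zz)]); ((1)%zz, [:: ((0)%zz, (0)%zz); ((0)%zz, (0)%zz); ((0)%zz, (0)%zz); ((0)%zz, (0)%zz);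 ((0)%zz, (0)%zz); ((0)%zz, (0)%zz); ((0)%zz, (0)%zz); ((0)%zz, (0)%zz)]); ((1)%zz, [:: ((0)%zz, (0)%zz); ((0)%zz, (0)%zz); ((0)%zz, (0)%zz); ((0)%zz, (0)%zz); ((0)%zz, (0)%zz); ((0)%zz, (0)%zz); ((0)%zz, (0)%zz); ((0)%zz, (0)%zz)]); ((1)%zz, [:: ((0)%zz, (0)%zz); ((0)%zz, (0)%zz); ((0)%zz, (0)%zz); ((0)%zz, (0)%zz); ((0)%zz, (0)%zz); ((0)%zz, (0)%zz); ((0)%zz, (0)%zz); ((0)%zz, (0)%zz)]); ((1)%zz, [:: ((0)%zz, (0)%zz); ((0)%zz, (0)%zz); ((0)%zz, (0)%zz); ((0)%zz, (0)%zz); ((0)%zz, (0)%zz); ((0)%zz, (0)%zz); ((0)%zz, (0)%zz); ((0)%zz, (0)%zz)]); ((1)%zz, [:: ((0)%zz, (0)%zz); ((0)%zz, (0)%zz); ((0)%zz, (0)%zz); ((0)%zz, (0)%zz); ((0)%zz, (0)%zz); ((0)%zz, (0)%zz); ((0)%zz, (0)%zz); ((0)%zz, (0)%zz)]); ((1)%zz, [:: ((0)%zz, (0)%zz); ((0)%zz, (0)%zz); ((0)%zz, (0)%zz); ((0)%zz, (0)%zz); ((0)%zz, (0)%zz); ((0)%zz, (0)%zz); ((0)%zz, (0)%zz); ((0)%zz, (0)%zz)]); ((1)%zz, [:: ((0)%zz, (0)%zz); ((0)%zz, (0)%zz); ((0)%zz, (0)%zz); ((0)%zz, (0)%zz); ((0)%zz,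 (0)%zz); ((0)%zz, (0)%zz); ((0)%zz, (0)%zz); ((0)%zz, (0)%zz)]); ((1)%zz, [:: ((0)%zz, (0)%zz); ((0)%zz, (0)%zz); ((0)%zz, (0)%zz); ((0)%zz, (0)%zz); ((0)%zz, (0)%zz); ((0)%zz, (0)%zz); ((0)%zz, (0)%zz); ((0)%zz, (0)%zz)]); ((7562650552528896000)%zz, [:: ((3450345065679906900)%zz, (1321362561963381300)%zz); ((-44831255900421870)%zz, (-84038016082760190)%zz); ((33302150304974980)%zz, (85477663281526560)%zz); ((-10009130985057780)%zz, (-16531961928685785)%zz); ((-90566912724824)%zz, (-153507224494392)%zz); ((-322451710127282)%zz, (-565308188935146)%zz); ((-117176554050)%zz, (-234869343150)%zz); ((245082291236694)%zz, (474058110977982)%zz)]); ((1)%zz, [:: ((0)%zz, (0)%zz); ((0)%zz, (0)%zz); ((0)%zz, (0)%zz); ((0)%zz, (0)%zz); ((0)%zz, (0)%zz); ((0)%zz, (0)%zz); ((0)%zz, (0)%zz); ((0)%zz, (0)%zz)]); ((199017119803392000)%zz, [:: ((73503002791666800)%zz, (26408182020031350)%zz); ((-1315537660425615)%zz, (-2029953390853905)%zz); ((1307779476228610)%zz, (1926017797368170)%zz); ((-256397524389585)%zz, (-383240736133245)%zz); ((-2075853582428)%zz, (-2536434412024)%zz); ((-8507999953214)%zz, (-12829587954667)%zz); ((-2779335825)%zz, (-5507837475)%zz); ((6894316818258)%zz, (10260998145549)%zz)]); ((1)%zz, [:: ((0)%zz, (0)%zz); ((0)%zz, (0)%zz); ((0)%zz,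 (0)%zz); ((0)%zz, (0)%zz); ((0)%zz, (0)%zz); ((0)%zz, (0)%zz); ((0)%zz, (0)%zz); ((0)%zz, (0)%zz)]); ((199017119803392000)%zz, [:: ((73503002791666800)%zz, (26408182020031350)%zz); ((-1315537660425615)%zz, (-2029953390853905)%zz); ((1307779476228610)%zz, (1926017797368170)%zz); ((-256397524389585)%zz, (-383240736133245)%zz); ((-2075853582428)%zz, (-2536434412024)%zz); ((-8507999953214)%zz, (-12829587954667)%zz); ((-2779335825)%zz, (-5507837475)%zz); ((6894316818258)%zz, (10260998145549)%zz)]); ((1)%zz, [:: ((0)%zz, (0)%zz); ((0)%zz, (0)%zz); ((0)%zz, (0)%zz); ((0)%zz, (0)%zz); ((0)%zz, (0)%zz); ((0)%zz, (0)%zz); ((0)%zz, (0)%zz); ((0)%zz, (0)%zz)]); ((3781325276264448000)%zz, [:: ((-253853246291213250)%zz, (-2355092995956119100)%zz); ((33731251620323400)%zz, (49330845247701105)%zz); ((-33272667306422500)%zz, (-48566263256923170)%zz); ((8331550188868125)%zz, (13252403570807745)%zz); ((78973841758244)%zz, (123000212668932)%zz); ((246788995410947)%zz, (464139236220756)%zz); ((107171849700)%zz, (157018049475)%zz); ((-213702060320829)%zz, (-363257141781492)%zz)]); ((1)%zz, [:: ((0)%zz, (0)%zz); ((0)%zz, (0)%zz); ((0)%zz, (0)%zz); ((0)%zz, (0)%zz); ((0)%zz, (0)%zz); ((0)%zz, (0)%zz); ((0)%zz, (0)%zz); ((0)%zz, (0)%zz)]); ((1512530110505779200)%zz, [:: ((141437984303242440)%zz,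 (197370074032864920)%zz); ((-3896905612298622)%zz, (-6580139331287346)%zz); ((4003411726811728)%zz, (6366862178737104)%zz); ((-937678426627833)%zz, (-1492856625296619)%zz); ((-8489352257792)%zz, (-12911367263208)%zz); ((-32146499491112)%zz, (-49684878087792)%zz); ((-11709641550)%zz, (-19242324450)%zz); ((25554116854464)%zz, (39931155727584)%zz)]); ((1)%zz, [:: ((0)%zz, (0)%zz); ((0)%zz, (0)%zz); ((0)%zz, (0)%zz); ((0)%zz, (0)%zz); ((0)%zz, (0)%zz); ((0)%zz, (0)%zz); ((0)%zz, (0)%zz); ((0)%zz, (0)%zz)]); ((1)%zz, [:: ((0)%zz, (0)%zz); ((0)%zz, (0)%zz); ((0)%zz, (0)%zz); ((0)%zz, (0)%zz); ((0)%zz, (0)%zz); ((0)%zz, (0)%zz); ((0)%zz, (0)%zz); ((0)%zz, (0)%zz)]); ((1)%zz, [:: ((0)%zz, (0)%zz); ((0)%zz, (0)%zz); ((0)%zz, (0)%zz); ((0)%zz, (0)%zz); ((0)%zz, (0)%zz); ((0)%zz, (0)%zz); ((0)%zz, (0)%zz); ((0)%zz, (0)%zz)]); ((1)%zz, [:: ((0)%zz, (0)%zz); ((0)%zz, (0)%zz); ((0)%zz, (0)%zz); ((0)%zz, (0)%zz); ((0)%zz, (0)%zz); ((0)%zz, (0)%zz); ((0)%zz, (0)%zz); ((0)%zz, (0)%zz)]); ((1)%zz, [:: ((0)%zz, (0)%zz); ((0)%zz, (0)%zz); ((0)%zz, (0)%zz); ((0)%zz, (0)%zz); ((0)%zz,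 (0)%zz); ((0)%zz, (0)%zz); ((0)%zz, (0)%zz); ((0)%zz, (0)%zz)]); ((1)%zz, [:: ((0)%zz, (0)%zz); ((0)%zz, (0)%zz); ((0)%zz, (0)%zz); ((0)%zz, (0)%zz); ((0)%zz, (0)%zz); ((0)%zz, (0)%zz); ((0)%zz, (0)%zz); ((0)%zz, (0)%zz)]); ((1)%zz, [:: ((0)%zz, (0)%zz); ((0)%zz, (0)%zz); ((0)%zz, (0)%zz); ((0)%zz, (0)%zz); ((0)%zz, (0)%zz); ((0)%zz, (0)%zz); ((0)%zz, (0)%zz); ((0)%zz, (0)%zz)]); ((1)%zz, [:: ((0)%zz, (0)%zz); ((0)%zz, (0)%zz); ((0)%zz, (0)%zz); ((0)%zz, (0)%zz); ((0)%zz, (0)%zz); ((0)%zz, (0)%zz); ((0)%zz, (0)%zz); ((0)%zz, (0)%zz)]); ((1)%zz, [:: ((0)%zz, (0)%zz); ((0)%zz, (0)%zz); ((0)%zz, (0)%zz); ((0)%zz, (0)%zz); ((0)%zz, (0)%zz); ((0)%zz, (0)%zz); ((0)%zz, (0)%zz); ((0)%zz, (0)%zz)]); ((1)%zz, [:: ((0)%zz, (0)%zz); ((0)%zz, (0)%zz); ((0)%zz, (0)%zz); ((0)%zz, (0)%zz); ((0)%zz, (0)%zz); ((0)%zz, (0)%zz); ((0)%zz, (0)%zz); ((0)%zz, (0)%zz)]); ((1512530110505779200)%zz, [:: ((17249657108981220)%zz, (-27159812406555840)%zz); ((482839652971434)%zz, (323139854998752)%zz); ((-68401606648056)%zz, (-534815646285668)%zz);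 ((46457412118191)%zz, (104077915292448)%zz); ((99959995752)%zz, (1160079415840)%zz); ((-410266438626)%zz, (4714393116424)%zz); ((1051036050)%zz, (1130309700)%zz); ((49494677190)%zz, (-3990281369784)%zz)]); ((1)%zz, [:: ((0)%zz, (0)%zz); ((0)%zz, (0)%zz); ((0)%zz, (0)%zz); ((0)%zz, (0)%zz); ((0)%zz, (0)%zz); ((0)%zz, (0)%zz); ((0)%zz, (0)%zz); ((0)%zz, (0)%zz)]); ((3781325276264448000)%zz, [:: ((-2659420150733412000)%zz, (853059728476464300)%zz); ((18583881287596350)%zz, (33811013440260210)%zz); ((-11649750062677100)%zz, (-34336416498616540)%zz); ((2015676224241975)%zz, (3458387483677440)%zz); ((6072619775128)%zz, (12234099124784)%zz); ((81243220968004)%zz, (109340223379442)%zz); ((15141333450)%zz, (75835732350)%zz); ((-51555490281708)%zz, (-101654220800334)%zz)]); ((1)%zz, [:: ((0)%zz, (0)%zz); ((0)%zz, (0)%zz); ((0)%zz, (0)%zz); ((0)%zz, (0)%zz); ((0)%zz, (0)%zz); ((0)%zz, (0)%zz); ((0)%zz, (0)%zz); ((0)%zz, (0)%zz)]); ((199017119803392000)%zz, [:: ((73503002791666800)%zz, (26408182020031350)%zz); ((-1315537660425615)%zz, (-2029953390853905)%zz); ((1307779476228610)%zz, (1926017797368170)%zz); ((-256397524389585)%zz, (-383240736133245)%zz); ((-2075853582428)%zz, (-2536434412024)%zz); ((-8507999953214)%zz, (-12829587954667)%zz); ((-2779335825)%zz, (-5507837475)%zz); ((6894316818258)%zz, (10260998145549)%zz)]);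 ((1)%zz, [:: ((0)%zz, (0)%zz); ((0)%zz, (0)%zz); ((0)%zz, (0)%zz); ((0)%zz, (0)%zz); ((0)%zz, (0)%zz); ((0)%zz, (0)%zz); ((0)%zz, (0)%zz); ((0)%zz, (0)%zz)]); ((3781325276264448000)%zz, [:: ((-2659420150733412000)%zz, (853059728476464300)%zz); ((18583881287596350)%zz, (33811013440260210)%zz); ((-11649750062677100)%zz, (-34336416498616540)%zz); ((2015676224241975)%zz, (3458387483677440)%zz); ((6072619775128)%zz, (12234099124784)%zz); ((81243220968004)%zz, (109340223379442)%zz); ((15141333450)%zz, (75835732350)%zz); ((-51555490281708)%zz, (-101654220800334)%zz)]); ((1)%zz, [:: ((0)%zz, (0)%zz); ((0)%zz, (0)%zz); ((0)%zz, (0)%zz); ((0)%zz, (0)%zz); ((0)%zz, (0)%zz); ((0)%zz, (0)%zz); ((0)%zz, (0)%zz); ((0)%zz, (0)%zz)]); ((79606847921356800)%zz, [:: ((-3239007019730460)%zz, (-667528643629980)%zz); ((17065818970728)%zz, (68634677700864)%zz); ((-51080288956532)%zz, (-50645452627616)%zz); ((9682673736852)%zz, (12919607779401)%zz); ((119543384200)%zz, (99039768688)%zz); ((477147406978)%zz, (339447262018)%zz); ((85603500)%zz, (184938000)%zz); ((-346886149614)%zz, (-273929925510)%zz)]); ((1)%zz, [:: ((0)%zz, (0)%zz); ((0)%zz, (0)%zz); ((0)%zz, (0)%zz); ((0)%zz, (0)%zz); ((0)%zz, (0)%zz); ((0)%zz, (0)%zz); ((0)%zz, (0)%zz); ((0)%zz,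 (0)%zz)]); ((1)%zz, [:: ((0)%zz, (0)%zz); ((0)%zz, (0)%zz); ((0)%zz, (0)%zz); ((0)%zz, (0)%zz); ((0)%zz, (0)%zz); ((0)%zz, (0)%zz); ((0)%zz, (0)%zz); ((0)%zz, (0)%zz)]); ((1)%zz, [:: ((0)%zz, (0)%zz); ((0)%zz, (0)%zz); ((0)%zz, (0)%zz); ((0)%zz, (0)%zz); ((0)%zz, (0)%zz); ((0)%zz, (0)%zz); ((0)%zz, (0)%zz); ((0)%zz, (0)%zz)]); ((1)%zz, [:: ((0)%zz, (0)%zz); ((0)%zz, (0)%zz); ((0)%zz, (0)%zz); ((0)%zz, (0)%zz); ((0)%zz, (0)%zz); ((0)%zz, (0)%zz); ((0)%zz, (0)%zz); ((0)%zz, (0)%zz)]); ((1)%zz, [:: ((0)%zz, (0)%zz); ((0)%zz, (0)%zz); ((0)%zz, (0)%zz); ((0)%zz, (0)%zz); ((0)%zz, (0)%zz); ((0)%zz, (0)%zz); ((0)%zz, (0)%zz); ((0)%zz, (0)%zz)]); ((1)%zz, [:: ((0)%zz, (0)%zz); ((0)%zz, (0)%zz); ((0)%zz, (0)%zz); ((0)%zz, (0)%zz); ((0)%zz, (0)%zz); ((0)%zz, (0)%zz); ((0)%zz, (0)%zz); ((0)%zz, (0)%zz)]); ((1)%zz, [:: ((0)%zz, (0)%zz); ((0)%zz, (0)%zz); ((0)%zz, (0)%zz); ((0)%zz, (0)%zz); ((0)%zz, (0)%zz); ((0)%zz, (0)%zz); ((0)%zz, (0)%zz); ((0)%zz, (0)%zz)]);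 ((1)%zz, [:: ((0)%zz, (0)%zz); ((0)%zz, (0)%zz); ((0)%zz, (0)%zz); ((0)%zz, (0)%zz); ((0)%zz, (0)%zz); ((0)%zz, (0)%zz); ((0)%zz, (0)%zz); ((0)%zz, (0)%zz)]); ((79606847921356800)%zz, [:: ((-3239007019730460)%zz, (-667528643629980)%zz); ((17065818970728)%zz, (68634677700864)%zz); ((-51080288956532)%zz, (-50645452627616)%zz); ((9682673736852)%zz, (12919607779401)%zz); ((119543384200)%zz, (99039768688)%zz); ((477147406978)%zz, (339447262018)%zz); ((85603500)%zz, (184938000)%zz); ((-346886149614)%zz, (-273929925510)%zz)]); ((1)%zz, [:: ((0)%zz, (0)%zz); ((0)%zz, (0)%zz); ((0)%zz, (0)%zz); ((0)%zz, (0)%zz); ((0)%zz, (0)%zz); ((0)%zz, (0)%zz); ((0)%zz, (0)%zz); ((0)%zz, (0)%zz)]); ((3781325276264448000)%zz, [:: ((-253853246291213250)%zz, (-2355092995956119100)%zz); ((33731251620323400)%zz, (49330845247701105)%zz); ((-33272667306422500)%zz, (-48566263256923170)%zz); ((8331550188868125)%zz, (13252403570807745)%zz); ((78973841758244)%zz, (123000212668932)%zz); ((246788995410947)%zz, (464139236220756)%zz); ((107171849700)%zz, (157018049475)%zz); ((-213702060320829)%zz, (-363257141781492)%zz)]); ((1)%zz, [:: ((0)%zz, (0)%zz); ((0)%zz, (0)%zz); ((0)%zz, (0)%zz); ((0)%zz, (0)%zz); ((0)%zz, (0)%zz); ((0)%zz, (0)%zz); ((0)%zz, (0)%zz); ((0)%zz,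 (0)%zz)]); ((7562650552528896000)%zz, [:: ((3450345065679906900)%zz, (1321362561963381300)%zz); ((-44831255900421870)%zz, (-84038016082760190)%zz); ((33302150304974980)%zz, (85477663281526560)%zz); ((-10009130985057780)%zz, (-16531961928685785)%zz); ((-90566912724824)%zz, (-153507224494392)%zz); ((-322451710127282)%zz, (-565308188935146)%zz); ((-117176554050)%zz, (-234869343150)%zz); ((245082291236694)%zz, (474058110977982)%zz)]); ((1)%zz, [:: ((0)%zz, (0)%zz); ((0)%zz, (0)%zz); ((0)%zz, (0)%zz); ((0)%zz, (0)%zz); ((0)%zz, (0)%zz); ((0)%zz, (0)%zz); ((0)%zz, (0)%zz); ((0)%zz, (0)%zz)]); ((1512530110505779200)%zz, [:: ((17249657108981220)%zz, (-27159812406555840)%zz); ((482839652971434)%zz, (323139854998752)%zz); ((-68401606648056)%zz, (-534815646285668)%zz); ((46457412118191)%zz, (104077915292448)%zz); ((99959995752)%zz, (1160079415840)%zz); ((-410266438626)%zz, (4714393116424)%zz); ((1051036050)%zz, (1130309700)%zz); ((49494677190)%zz, (-3990281369784)%zz)]); ((1)%zz, [:: ((0)%zz, (0)%zz); ((0)%zz, (0)%zz); ((0)%zz, (0)%zz); ((0)%zz, (0)%zz); ((0)%zz, (0)%zz); ((0)%zz, (0)%zz); ((0)%zz, (0)%zz); ((0)%zz, (0)%zz)]); ((1)%zz, [:: ((0)%zz, (0)%zz); ((0)%zz, (0)%zz); ((0)%zz, (0)%zz); ((0)%zz, (0)%zz); ((0)%zz, (0)%zz); ((0)%zz, (0)%zz);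 ((0)%zz, (0)%zz); ((0)%zz, (0)%zz)]); ((1)%zz, [:: ((0)%zz, (0)%zz); ((0)%zz, (0)%zz); ((0)%zz, (0)%zz); ((0)%zz, (0)%zz); ((0)%zz, (0)%zz); ((0)%zz, (0)%zz); ((0)%zz, (0)%zz); ((0)%zz, (0)%zz)]); ((1)%zz, [:: ((0)%zz, (0)%zz); ((0)%zz, (0)%zz); ((0)%zz, (0)%zz); ((0)%zz, (0)%zz); ((0)%zz, (0)%zz); ((0)%zz, (0)%zz); ((0)%zz, (0)%zz); ((0)%zz, (0)%zz)]); ((1)%zz, [:: ((0)%zz, (0)%zz); ((0)%zz, (0)%zz); ((0)%zz, (0)%zz); ((0)%zz, (0)%zz); ((0)%zz, (0)%zz); ((0)%zz, (0)%zz); ((0)%zz, (0)%zz); ((0)%zz, (0)%zz)]); ((1)%zz, [:: ((0)%zz, (0)%zz); ((0)%zz, (0)%zz); ((0)%zz, (0)%zz); ((0)%zz, (0)%zz); ((0)%zz, (0)%zz); ((0)%zz, (0)%zz); ((0)%zz, (0)%zz); ((0)%zz, (0)%zz)]); ((1512530110505779200)%zz, [:: ((141437984303242440)%zz, (197370074032864920)%zz); ((-3896905612298622)%zz, (-6580139331287346)%zz); ((4003411726811728)%zz, (6366862178737104)%zz); ((-937678426627833)%zz, (-1492856625296619)%zz); ((-8489352257792)%zz, (-12911367263208)%zz); ((-32146499491112)%zz, (-49684878087792)%zz); ((-11709641550)%zz, (-19242324450)%zz); ((25554116854464)%zz, (39931155727584)%zz)]); ((1)%zz, [:: ((0)%zz,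 (0)%zz); ((0)%zz, (0)%zz); ((0)%zz, (0)%zz); ((0)%zz, (0)%zz); ((0)%zz, (0)%zz); ((0)%zz, (0)%zz); ((0)%zz, (0)%zz); ((0)%zz, (0)%zz)]); ((7562650552528896000)%zz, [:: ((-670271874799269600)%zz, (-329885335451687400)%zz); ((9193437246769380)%zz, (20296357093803120)%zz); ((-8762941504580120)%zz, (-19414484616035080)%zz); ((2483569030165695)%zz, (3978824063841630)%zz); ((24697250869024)%zz, (37751656240352)%zz); ((99747370714792)%zz, (123728251193756)%zz); ((29381831100)%zz, (55891435800)%zz); ((-70220966746824)%zz, (-106704437547732)%zz)]); ((1)%zz, [:: ((0)%zz, (0)%zz); ((0)%zz, (0)%zz); ((0)%zz, (0)%zz); ((0)%zz, (0)%zz); ((0)%zz, (0)%zz); ((0)%zz, (0)%zz); ((0)%zz, (0)%zz); ((0)%zz, (0)%zz)]); ((1)%zz, [:: ((0)%zz, (0)%zz); ((0)%zz, (0)%zz); ((0)%zz, (0)%zz); ((0)%zz, (0)%zz); ((0)%zz, (0)%zz); ((0)%zz, (0)%zz); ((0)%zz, (0)%zz); ((0)%zz, (0)%zz)]); ((1)%zz, [:: ((0)%zz, (0)%zz); ((0)%zz, (0)%zz); ((0)%zz, (0)%zz); ((0)%zz, (0)%zz); ((0)%zz, (0)%zz); ((0)%zz, (0)%zz); ((0)%zz, (0)%zz); ((0)%zz, (0)%zz)]); ((1)%zz, [:: ((0)%zz, (0)%zz); ((0)%zz, (0)%zz); ((0)%zz, (0)%zz); ((0)%zz, (0)%zz);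 ((0)%zz, (0)%zz); ((0)%zz, (0)%zz); ((0)%zz, (0)%zz); ((0)%zz, (0)%zz)]); ((1)%zz, [:: ((0)%zz, (0)%zz); ((0)%zz, (0)%zz); ((0)%zz, (0)%zz); ((0)%zz, (0)%zz); ((0)%zz, (0)%zz); ((0)%zz, (0)%zz); ((0)%zz, (0)%zz); ((0)%zz, (0)%zz)]); ((1)%zz, [:: ((0)%zz, (0)%zz); ((0)%zz, (0)%zz); ((0)%zz, (0)%zz); ((0)%zz, (0)%zz); ((0)%zz, (0)%zz); ((0)%zz, (0)%zz); ((0)%zz, (0)%zz); ((0)%zz, (0)%zz)]); ((1)%zz, [:: ((0)%zz, (0)%zz); ((0)%zz, (0)%zz); ((0)%zz, (0)%zz); ((0)%zz, (0)%zz); ((0)%zz, (0)%zz); ((0)%zz, (0)%zz); ((0)%zz, (0)%zz); ((0)%zz, (0)%zz)]); ((1)%zz, [:: ((0)%zz, (0)%zz); ((0)%zz, (0)%zz); ((0)%zz, (0)%zz); ((0)%zz, (0)%zz); ((0)%zz, (0)%zz); ((0)%zz, (0)%zz); ((0)%zz, (0)%zz); ((0)%zz, (0)%zz)]); ((1)%zz, [:: ((0)%zz, (0)%zz); ((0)%zz, (0)%zz); ((0)%zz, (0)%zz); ((0)%zz, (0)%zz); ((0)%zz, (0)%zz); ((0)%zz, (0)%zz); ((0)%zz, (0)%zz); ((0)%zz, (0)%zz)]); ((1)%zz, [:: ((0)%zz, (0)%zz); ((0)%zz, (0)%zz); ((0)%zz, (0)%zz); ((0)%zz, (0)%zz); ((0)%zz,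 (0)%zz); ((0)%zz, (0)%zz); ((0)%zz, (0)%zz); ((0)%zz, (0)%zz)]); ((1)%zz, [:: ((0)%zz, (0)%zz); ((0)%zz, (0)%zz); ((0)%zz, (0)%zz); ((0)%zz, (0)%zz); ((0)%zz, (0)%zz); ((0)%zz, (0)%zz); ((0)%zz, (0)%zz); ((0)%zz, (0)%zz)]); ((1)%zz, [:: ((0)%zz, (0)%zz); ((0)%zz, (0)%zz); ((0)%zz, (0)%zz); ((0)%zz, (0)%zz); ((0)%zz, (0)%zz); ((0)%zz, (0)%zz); ((0)%zz, (0)%zz); ((0)%zz, (0)%zz)])].

Definition Lget (Ld : seq (seq zt)) (e : nat) (t : tri) : seq zt := nth [::] Ld (index t (trip e)).
Definition qsel (Ld : seq (seq zt)) (e : nat) (i : nat) (n : tri) : seq zt :=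
  if ge2 i n then Lget Ld e (sub2 i n) else [::].
Definition qL Ld e n := ladd (qsel Ld e 0 n) (ladd (qsel Ld e 1 n) (qsel Ld e 2 n)).
Definition formn (r : seq tri) (n : tri) : seq zt := if alleven n then lunit (idxr r n) zt1 else [::].
Definition target (e : nat) (Ld : seq (seq zt)) (Dg : BinNums.Z) (n : tri) : seq zt :=
  lsub (lscale (zi Dg) (formn (reps e.+2) n)) (qL Ld e n).
Definition Es (d : nat) (s : BinNums.Z) (pts : seq vt) : seq (seq zt) := [seq eqE d s v | v <- pts].
Definition chk1 (e : nat) (s : BinNums.Z) (pts : seq vt) (Ld : seq (seq zt)) (Dg : BinNums.Z)
   (n : tri) (c : BinNums.Z * seq zt) : bool :=
  ~~ BinInt.Z.eqb c.1 0%zz && lzero (lsub (lcomb c.2 (Es e.+2 s pts)) (lscale (zi c.1) (target e Ld Dg n))).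
Definition check (e : nat) (s : BinNums.Z) (pts : seq vt) (Ld : seq (seq zt)) (Dg : BinNums.Z)
  (cs : seq (BinNums.Z * seq zt)) : bool :=
  ~~ BinInt.Z.eqb Dg 0%zz &&
  all (fun n => chk1 e s pts Ld Dg n (nth (0%zz, [::]) cs (index n (trip e.+2)))) (trip e.+2).
Definition check2 (Ld : seq (seq zt)) : bool :=
  all (fun n => lzero (lsub (Lget Ld 2 n)
     (ladd (if ge2 0 n then Lget Ld 2 (2, 0, 0)%N else [::])
       (ladd (if ge2 1 n then Lget Ld 2 (2, 0, 0)%N else [::])
             (if ge2 2 n then Lget Ld 2 (2, 0, 0)%N else [::]))))) (trip 2).




Lemma check4 : check 2 16 pts4 L4 Dg4 cert4. Proof. by vm_compute. Qed.
Lemma check8 : check 6 256 pts8 L8 Dg8 cert8. Proof. by vm_compute. Qed.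
Lemma check14 : check 12 16384 pts14 L14 Dg14 cert14. Proof. by vm_compute. Qed.
Lemma check4b : check2 L4. Proof. by vm_compute. Qed.

Section Final.
Variable R : realType.
Local Notation C := (R[i]).

Lemma embz_neq0 z : ~~ BinInt.Z.eqb z 0%zz -> embz R z != 0.
Proof.
move=> hz; rewrite /embz intr_eq0; apply/eqP => h.
move: hz; rewrite -(int_of_ZK z) h /=. by [].
Qed.

Lemma divide_by_Q e s pts Ld Dg cs (F : {mpoly C[3]}) :
  ~~ odd e -> F \is e.+2.-homog -> cmp (icoZ R) F = F -> cmp (icoT R) F = F -> cmp (icoP R) F = F ->
  int_of_Z s = (2 ^ e.+2)%N%:Z -> check e s pts Ld Dg cs ->
  F = Qp C * tpoly (trip e) (fun t => lin (Lget Ld e t) (aof F e.+2) / embz R Dg).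
Proof.
move=> he hF hZ hT hP hs /andP[hDg hall].
set a := aof F e.+2.
have he2 : ~~ odd e.+2 by rewrite /= negbK.
have hE : forall E, E \in Es e.+2 s pts -> lin E a = 0.
  by move=> E /mapP[v _ ->]; exact: eqE_zero.
apply: divQ hF _ => n hn.
have hnT : n \in trip e.+2 by rewrite mem_trip hn.
have /andP[hc hz] := allP hall n hnT.
have hc' : (nth (0%zz, [::]) cs (index n (trip e.+2))).1 <> 0%zz.
  by move=> h; move: hc; rewrite h.
have ht := lin_cert hE hc' hz.
rewrite /target lin_lsub lin_lscale emb_zi in ht.
have hDg0 := embz_neq0 hDg.
have hform : lin (formn (reps e.+2) n) a = F@_(mk3 n).
  rewrite -/(phi F n) (phi_a hZ hT he2 hnT) /formn; case: (alleven n) => //.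
  by rewrite lin_lunit emb1 mul1r.
rewrite hform in ht; move/eqP: ht; rewrite subr_eq0 => /eqP ht.
have -> : F@_(mk3 n) = lin (qL Ld e n) a / embz R Dg.
  by rewrite -ht mulrC mulrA mulVf // mul1r.
rewrite /qL !lin_ladd addrA /qrhs /qterm /qsel !mulrDl.
by congr (_ + _ + _); case: (ge2 _ n) => //; rewrite mul0r.
Qed.

Lemma msize_homog (p : {mpoly C[3]}) d : p != 0 -> p \is d.-homog -> msize p = d.+1.
Proof.
move=> hp hd; have h := dhomog_msize hd.
have := dhomog_uniq hp hd h => ->.
rewrite prednK // lt0n msize_poly_eq0; exact: hp.
Qed.

Lemma X2_0 i : (i < 3)%N -> 'X_(ordn i) ^+ 2 = 'X_[mk3 (add2 i (0, 0, 0)%N)] :> {mpoly C[3]}.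
Proof.
move=> hi; rewrite -X2_mk3 // (_ : mk3 (0, 0, 0)%N = 0%MM) ?mpolyX0 ?mulr1 //.
by apply/mnmP; apply: ord3P; rewrite mnmE.
Qed.

Lemma Qp_homog : (Qp C) \is 2.-homog.
Proof.
rewrite /Qp -[i0]/(ordn 0) -[i1]/(ordn 1) -[i2]/(ordn 2) !X2_0 //.
by rewrite !dhomogD // dhomogX /= mdeg_mk3.
Qed.

Lemma Qp_neq0 : (Qp C) != 0.
Proof.
apply/eqP => h.
have : (Qp C)@_(mk3 (2, 0, 0)%N) = 0 by rewrite h mcoeff0.
rewrite /Qp -[i0]/(ordn 0) -[i1]/(ordn 1) -[i2]/(ordn 2) !X2_0 //.
rewrite !mcoeffD !mcoeffX !(inj_eq mk3_inj) /=.
by rewrite addr0 addr0 => /eqP; rewrite oner_eq0.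
Qed.

Lemma Qp_nc : nonconstant (Qp C).
Proof. by rewrite /nonconstant (msize_homog Qp_neq0 Qp_homog). Qed.

End Final.

Lemma main_aux (R : realType) :
  (forall F : {mpoly R[i][3]}, in_ico_system 4 F -> nonreduced F) /\
  (forall (d : nat) (F : {mpoly R[i][3]}), (d = 8 \/ d = 14)%N ->
     in_ico_system d F -> reducible F \/ nonreduced F).
Proof.
split.
  move=> F [hF0 [hhom hinv]].
  have [hZ hT hP] := chars_trivial hF0 hinv.
  have hF := @divide_by_Q R 2 16%zz pts4 L4 Dg4 cert4 F isT hhom hZ hT hP (erefl _) check4.
  set a := aof F 4 in hF.
  set g := (fun t => _) in hF.
  set G := tpoly (trip 2) g in hF.
  set c := lin (Lget L4 2 (2, 0, 0)%N) a / embz R Dg4.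
  have hG : G = Qp _ * tpoly (trip 0) (fun _ => c).
    apply: divQ; first exact: tpoly_homog.
    move=> n hn; have hnT : n \in trip 2 by rewrite mem_trip hn.
    rewrite tpoly_coef ?uniq_trip // hnT /g.
    have := lin_lzero a (allP check4b n hnT).
    rewrite lin_lsub !lin_ladd => /eqP; rewrite subr_eq0 => /eqP ->.
    rewrite addrA /qrhs /qterm !mulrDl; congr (_ + _ + _); case: (ge2 _ n) => //; by rewrite mul0r.
  rewrite /nonreduced; exists (@Qp (R[i])); exists (tpoly (trip 0) (fun _ => c)); split; first exact: (Qp_nc R).
  by rewrite hF hG mulrA.
move=> d F hd [hF0 [hhom hinv]].
have [hZ hT hP] := chars_trivial hF0 hinv.
left.
have key : forall e s pts Ld Dg cs, ~~ odd e -> (0 < e)%N -> d = e.+2 ->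
    int_of_Z s = (2 ^ e.+2)%N%:Z -> check e s pts Ld Dg cs -> reducible F.
  move=> e s pts Ld Dg cs he he0 hde hs hc; subst d.
  have hF := divide_by_Q he hhom hZ hT hP hs hc.
  set G := tpoly _ _ in hF.
  rewrite /reducible; exists (@Qp (R[i])); exists G; split; first exact: (Qp_nc R); split => //.
  have hG0 : G != 0 by apply/eqP => h0; move: hF0; rewrite hF h0 mulr0 eqxx.
  by rewrite /nonconstant (msize_homog hG0 (tpoly_homog _ _)) ltnS.
case: hd => hd.
  exact: (key 6 256%zz pts8 L8 Dg8 cert8 isT isT hd (erefl _) check8).
exact: (key 12 16384%zz pts14 L14 Dg14 cert14 isT isT hd (erefl _) check14).
Qed.

Local Close Scope ring_scope.

Theorem mainTheorem17 (R : realType) :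
  (forall F : {mpoly R[i][3]}, in_ico_system 4 F -> nonreduced F) /\
  (forall (d : nat) (F : {mpoly R[i][3]}), (d = 8 \/ d = 14)%N ->
     in_ico_system d F -> reducible F \/ nonreduced F).
Proof. exact: main_aux. Qed.
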